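(* Consider the impulsive time-delay system \[ \dot x(t)=f(t,x_t),\ t\neq t_k;\qquad \Delta x(t)=g(t,x_{t^-}),\ t=t_k;\qquad x_{t_0}=\phi, \] as described in the context. Suppose there exist $V_1\in\mathcal V_0$, $V_2\in\mathcal V_0^*$, functions $\alpha_1,\alpha_2,\alpha_3\in\mathcal K_\infty$, and constants $c\in\mathbb R$, $\varrho_1,\varrho_2,\mu\ge 0$, $\lambda>0$, $\kappa>0$ such that, for all $t\in\mathbb R^+$ and all $\psi\in\mathcal{PC}_\tau$: \begin{itemize} \item[(i)] $\alpha_1(\|\psi(0)\|)\le V_1(t,\psi(0))\le \alpha_2(\|\psi(0)\|)$ and $0\le V_2(t,\psi)\le \alpha_3(\|\psi\|_\tau)$; \item[(ii)] the functional $V(t,\psi):=V_1(t,\psi(0))+V_2(t,\psi)$ satisfies $\mathrm D^+V(t,\psi)\le -c\,V(t,\psi)$; \item[(iii)] $V_1(t,\psi(0)+g(t,\psi))\le \varrho_1 V_1(t^-,\psi(0))+\varrho_2\sup_{s\in[-\tau,0]}V_1(t^-+s,\psi(s))$, where $V_1(t^-+s,y):=\lim_{h\to0^+}V_1(t+s-h,y)$; \item[(iv)] $V_2(t,\psi)\le \kappa\sup_{s\in[-\tau,0]}V_1(t+s,\psi(s))$; \item[(v)] there is a constant $\sigma\in\mathbb R$ such that for all $t>s\ge t_0$, \[ -\sigma N(t,s)-(c-\lambda)(t-s)\le \mu, \] where $\sigma$ is determined as follows (and one of the four cases below holds): \begin{itemize} \item if $c>0$ and $\varrho_1\ge 1$: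 $\sigma=-\ln(\varrho_1+\varrho_2e^{c\tau})\ (\le 0)$; \item if $c>0$, $\varrho_1<1$ and $\varrho_1+[(1-\varrho_1)\kappa+\varrho_2]e^{c\tau}\ge 1$: $\sigma=-\ln\big(\varrho_1+[(1-\varrho_1)\kappa+\varrho_2]e^{c\tau}\big)\ (\le 0)$; \item if $c>0$, $\varrho_1<1$ and $\varrho_1+[(1-\varrho_1)\kappa+\varrho_2]e^{c\tau}<1$: $\sigma>0$ is a constant with $\varrho_1e^{\sigma}+[(1-\varrho_1)\kappa+\varrho_2]e^{c\tau}e^{\sigma N(t_k,t_k-\tau)}\le 1$ for all $k\in\mathbb N$; \item if $c\le 0$, $\varrho_1<1$ and $\varrho_1+(1-\varrho_1)\kappa+\varrho_2<1$: $\sigma>0$ is a constant with $\varrho_1e^{\sigma}+[(1-\varrho_1)\kappa+\varrho_2]e^{\sigma N(t_k,t_k-\tau)}\le 1$ for all $k\in\mathbb N$. \end{itemize} \end{itemize} Then the system is globally asymptotically stable.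
   Context: Let $\tau>0$ be the maximal delay, $\mathcal{PC}_\tau=\mathcal{PC}([-\tau,0],\mathbb R^n)$ the space of piecewise right-continuous functions $[-\tau,0]\to\mathbb R^n$ with norm $\|\varphi\|_\tau=\sup_{s\in[-\tau,0]}\|\varphi(s)\|$ ($\|\cdot\|$ Euclidean). For a piecewise right-continuous $x:[-\tau,\infty)\to\mathbb R^n$, $x_t(s)=x(t+s)$, and $x_{t^-}(s)=x(t+s)$ for $s\in[-\tau,0)$, $x_{t^-}(0)=x(t^-)$ (left limit). $\Delta x(t)=x(t)-x(t^-)$; solutions are right-continuous at impulse times. The maps $f,g:\mathbb R^+\times\mathcal{PC}_\tau\to\mathbb R^n$ satisfy $f(t,0)=g(t,0)=0$, and are assumed regular enough that for every $t_0\ge0$ and $\phi\in\mathcal{PC}_\tau$ there is a unique solution $x(t)=x(t,t_0,\phi)$ on a maximal interval $[t_0-\tau,t_0+\Gamma)$, $0<\Gamma\le\infty$, and that solutions which remain bounded extend globally. The impulse times $t_0<t_1<t_2<\cdots$ form a fixed strictly increasing sequence with $t_k\to\infty$. $N(t,s)$ is the number of impulse times in $(s,t]$ for $t>s\ge t_0$. A function $\alpha:\mathbb R^+\to\mathbb R^+$ is of class $\mathcal K_\infty$ if continuous, strictly increasing, unbounded, with $\alpha(0)=0$. Class $\mathcal V_0$: functions $V:\mathbb R^+\times\mathbb R^n\to\mathbb R^+$ such that for every piecewise right-continuous $x$, $t\mapsto V(t,x(t))$ is piecewise right-continuous and can be discontinuous at $t^*$ only if $x$ is discontinuous at $t^*$.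 Class $\mathcal V_0^*$: functionals $V:\mathbb R^+\times\mathcal{PC}_\tau\to\mathbb R^+$ such that for every piecewise right-continuous $x:[-\tau,\infty)\to\mathbb R^n$, $t\mapsto V(t,x_t)$ is continuous, and $V$ is locally Lipschitz in its second argument. The upper right-hand derivative along the system is $\mathrm D^+V(t,\psi)=\limsup_{h\to0^+}\frac{V(t+h,x^{(t,\psi)}_{t+h})-V(t,\psi)}{h}$, where $x^{(t,\psi)}$ is the solution with $x_t=\psi$ and $h$ is small enough that $(t,t+h)$ contains no impulse time. Global asymptotic stability (GAS): the trivial solution is stable (for every $\varepsilon>0$ there is $\delta>0$ with $\|\phi\|_\tau<\delta\Rightarrow\|x(t,t_0,\phi)\|<\varepsilon$ for all $t\ge t_0$) and $\lim_{t\to\infty}\|x(t,t_0,\phi)\|=0$ for every $\phi\in\mathcal{PC}_\tau$. *)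

(* Defs.v *)
From Stdlib Require Import Reals List.
From Stdlib Require Fin.
From Coquelicot Require Import Rbar Lub.
Import ListNotations.
Open Scope R_scope.

Definition Vec (n : nat) := Fin.t n -> R.

Fixpoint sumsq (n : nat) : (Fin.t n -> R) -> R :=
  match n return (Fin.t n -> R) -> R with
  | O => fun _ => 0
  | S m => fun x => (x Fin.F1) ^ 2 + sumsq m (fun i => x (Fin.FS i))
  end.

Definition vnorm {n : nat} (x : Vec n) : R := sqrt (sumsq n x).
Definition vzero {n : nat} : Vec n := fun _ => 0.
Definition vadd {n : nat} (x y : Vec n) : Vec n := fun i => x i + y i.
Definition vsub {n : nat} (x y : Vec n) : Vec n := fun i => x i - y i.
Definition vscal {n : nat} (a : R) (x : Vec n) : Vec n := fun i => a * x i.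
Definition vdist {n : nat} (x y : Vec n) : R := vnorm (vsub x y).
Definition rdist (x y : R) : R := Rabs (x - y).

Definition cont_at {X : Type} (d : X -> X -> R) (x : R -> X) (t : R) : Prop :=
  forall eps, 0 < eps -> exists del, 0 < del /\
    forall u, Rabs (u - t) < del -> d (x u) (x t) < eps.

Definition rcont_at {X : Type} (d : X -> X -> R) (x : R -> X) (t : R) : Prop :=
  forall eps, 0 < eps -> exists del, 0 < del /\
    forall u, t <= u < t + del -> d (x u) (x t) < eps.

Definition has_llim {X : Type} (d : X -> X -> R) (x : R -> X) (t : R) (L : X) : Prop :=
  forall eps, 0 < eps -> exists del, 0 < del /\
    forall u, t - del < u < t -> d (x u) L < eps.

Definition PRC {X : Type} (d : X -> X -> R) (x : R -> X) : Prop :=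
  (forall t, rcont_at d x t) /\
  (forall t, exists L, has_llim d x t L) /\
  (forall a b, exists l : list R,
      forall t, a <= t <= b -> ~ In t l -> cont_at d x t).

(* ---------- the phase space PC_tau ----------
   An element of PC([-tau,0],R^n) is represented by a function R -> Vec n
   which vanishes outside [-tau,0] (normalized representative). *)
Definition PC {n : nat} (tau : R) (psi : R -> Vec n) : Prop :=
  (forall s, ~ (-tau <= s <= 0) -> psi s = vzero) /\
  (forall s, -tau <= s < 0 -> forall eps, 0 < eps -> exists del, 0 < del /\
      forall u, s <= u < s + del -> u <= 0 -> vdist (psi u) (psi s) < eps) /\
  (forall s, -tau < s <= 0 -> exists L, has_llim vdist psi s L) /\
  (exists l : list R, forall s, -tau < s < 0 -> ~ In s l -> cont_at vdist psi s).

Definition supnorm {n : nat} (tau : R) (psi : R -> Vec n) : R :=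
  real (Lub_Rbar (fun r => exists s, -tau <= s <= 0 /\ r = vnorm (psi s))).

Definition fsub {n : nat} (psi phi : R -> Vec n) : R -> Vec n :=
  fun s => vsub (psi s) (phi s).

Definition seg {n : nat} (tau : R) (x : R -> Vec n) (t : R) : R -> Vec n :=
  fun s => if Rle_dec (-tau) s then if Rle_dec s 0 then x (t + s) else vzero
           else vzero.

(* x_{t^-}, where L = x(t^-) *)
Definition segm {n : nat} (tau : R) (x : R -> Vec n) (t : R) (L : Vec n)
  : R -> Vec n :=
  fun s => if Rle_dec (-tau) s then
             if Rlt_dec s 0 then x (t + s)
             else if Req_EM_T s 0 then L else vzero
           else vzero.

Definition right_deriv {n : nat} (x : R -> Vec n) (t : R) (v : Vec n) : Prop :=
  forall eps, 0 < eps -> exists del, 0 < del /\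
    forall h, 0 < h < del ->
      vnorm (vsub (vsub (x (t + h)) (x t)) (vscal h v)) <= eps * h.

Definition IsSolOn {n : nat} (tau : R) (tk : nat -> R)
  (f g : R -> (R -> Vec n) -> Vec n) (s0 : R) (psi : R -> Vec n) (T : R)
  (x : R -> Vec n) : Prop :=
  (forall s, -tau <= s <= 0 -> x (s0 + s) = psi s) /\
  (forall t, s0 <= t < s0 + T -> right_deriv x t (f t (seg tau x t))) /\
  (forall t, s0 < t < s0 + T -> (forall k, tk k <> t) -> cont_at vdist x t) /\
  (forall k, s0 < tk k < s0 + T -> exists L, has_llim vdist x (tk k) L /\
      x (tk k) = vadd L (g (tk k) (segm tau x (tk k) L))).

(* standing regularity assumption: for every initial time s0 >= 0 and
   psi in PC_tau there is a unique solution on a maximal interval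
   [s0 - tau, s0 + Gam), and a solution that stays bounded is global *)
Definition WellPosed {n : nat} (tau : R) (tk : nat -> R)
  (f g : R -> (R -> Vec n) -> Vec n) : Prop :=
  forall s0 (psi : R -> Vec n), 0 <= s0 -> PC tau psi ->
  exists (x : R -> Vec n) (Gam : Rbar),
    Rbar_lt (Finite 0) Gam /\
    (forall T, 0 < T -> Rbar_le (Finite T) Gam -> IsSolOn tau tk f g s0 psi T x) /\
    (forall T y, 0 < T -> IsSolOn tau tk f g s0 psi T y ->
       Rbar_le (Finite T) Gam /\
       forall t, s0 - tau <= t < s0 + T -> y t = x t) /\
    (forall G, Gam = Finite G ->
       forall M, exists t, s0 <= t < s0 + G /\ M < vnorm (x t)).

(* N(t,s): number of impulse times t_k (k >= 1) in (s,t] *)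
Definition IsN (tk : nat -> R) (t s : R) (m : nat) : Prop :=
  exists K : nat, (forall k, (K <= k)%nat -> t < tk k) /\
    m = length (filter (fun k => if Rlt_dec s (tk k) then
                                   if Rle_dec (tk k) t then true else false
                                 else false) (seq 1 K)).

Definition Kinf (a : R -> R) : Prop :=
  a 0 = 0 /\
  (forall x, 0 <= x -> forall eps, 0 < eps -> exists del, 0 < del /\
      forall y, 0 <= y -> Rabs (y - x) < del -> Rabs (a y - a x) < eps) /\
  (forall x y, 0 <= x -> x < y -> a x < a y) /\
  (forall M, exists x, 0 <= x /\ M < a x).

(* class V_0 (time domain taken to be all of R) *)
Definition V0 {n : nat} (V : R -> Vec n -> R) : Prop :=
  (forall t y, 0 <= V t y) /\
  (forall x : R -> Vec n, PRC vdist x ->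
     PRC rdist (fun t => V t (x t)) /\
     (forall t, cont_at vdist x t -> cont_at rdist (fun u => V u (x u)) t)).

Definition V0star {n : nat} (tau : R) (V : R -> (R -> Vec n) -> R) : Prop :=
  (forall t psi, 0 <= t -> PC tau psi -> 0 <= V t psi) /\
  (forall x : R -> Vec n, PRC vdist x -> forall t, 0 <= t ->
     forall eps, 0 < eps -> exists del, 0 < del /\
       forall u, 0 <= u -> Rabs (u - t) < del ->
         Rabs (V u (seg tau x u) - V t (seg tau x t)) < eps) /\
  (forall t psi, 0 <= t -> PC tau psi -> exists r Lc, 0 < r /\
     forall psi1 psi2, PC tau psi1 -> PC tau psi2 ->
       supnorm tau (fsub psi1 psi) < r -> supnorm tau (fsub psi2 psi) < r ->
       Rabs (V t psi1 - V t psi2) <= Lc * supnorm tau (fsub psi1 psi2)).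

Definition GAS {n : nat} (tau : R) (tk : nat -> R)
  (f g : R -> (R -> Vec n) -> Vec n) (t0 : R) : Prop :=
  (forall eps, 0 < eps -> exists del, 0 < del /\
     forall phi : R -> Vec n, PC tau phi -> supnorm tau phi < del ->
     forall T x, 0 < T -> IsSolOn tau tk f g t0 phi T x ->
     forall t, t0 <= t < t0 + T -> vnorm (x t) < eps) /\
  (forall phi : R -> Vec n, PC tau phi -> exists x,
     (forall T, 0 < T -> IsSolOn tau tk f g t0 phi T x) /\
     forall eps, 0 < eps -> exists T0, forall t, T0 <= t -> vnorm (x t) < eps).

(* Main.v *)
Require Import Defs.
From Stdlib Require Import Reals Lra Lia List FunctionalExtensionality Classical.
From Coquelicot Require Import Rbar Lub.
Open Scope R_scope.

Lemma sumsq_nonneg n (x : Fin.t n -> R) : 0 <= sumsq n x.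
Proof. induction n; simpl. lra. specialize (IHn (fun i => x (Fin.FS i))). nra. Qed.

Lemma vnorm_nonneg n (x : Vec n) : 0 <= vnorm x.
Proof. apply sqrt_pos. Qed.

Lemma sumsq_zero n : sumsq n (fun _ => 0) = 0.
Proof. induction n; simpl. lra. rewrite IHn. ring. Qed.

Lemma vnorm_zero n : vnorm (@vzero n) = 0.
Proof. unfold vnorm, vzero. rewrite sumsq_zero. apply sqrt_0. Qed.

Lemma sumsq_scal n a (x : Fin.t n -> R) : sumsq n (fun i => a * x i) = a^2 * sumsq n x.
Proof. induction n; simpl. ring. rewrite (IHn (fun i => x (Fin.FS i))). ring. Qed.

Lemma vnorm_scal n a (x : Vec n) : vnorm (vscal a x) = Rabs a * vnorm x.
Proof.
  unfold vnorm, vscal. rewrite sumsq_scal. rewrite sqrt_mult_alt.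
  - f_equal. rewrite <- sqrt_Rsqr_abs. unfold Rsqr. f_equal. ring.
  - nra.
Qed.

Lemma sqrt_tri2 A B p q : 0 <= p -> 0 <= q ->
  A * B + p * q <= sqrt (A^2 + p^2) * sqrt (B^2 + q^2).
Proof.
  intros Hp Hq.
  rewrite <- sqrt_mult by nra.
  destruct (Rle_dec (A*B+p*q) 0). { pose proof (sqrt_pos ((A ^ 2 + p ^ 2) * (B ^ 2 + q ^ 2))). lra. }
  rewrite <- (sqrt_square (A*B+p*q)) by lra.
  apply sqrt_le_1_alt. pose proof (pow2_ge_0 (A*q - B*p)). nra.
Qed.

Lemma sumsq_S n (x : Fin.t (S n) -> R) : sumsq (S n) x = x Fin.F1 ^ 2 + sumsq n (fun i => x (Fin.FS i)).
Proof. reflexivity. Qed.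

Lemma sumsq_tri n (a b : Fin.t n -> R) :
  sqrt (sumsq n (fun i => a i + b i)) <= sqrt (sumsq n a) + sqrt (sumsq n b).
Proof.
  induction n.
  - simpl. rewrite sqrt_0. lra.
  - rewrite !sumsq_S. specialize (IHn (fun i => a (Fin.FS i)) (fun i => b (Fin.FS i))). simpl in IHn.
    set (Sa := sumsq n (fun i => a (Fin.FS i))) in *.
    set (Sb := sumsq n (fun i => b (Fin.FS i))) in *.
    set (Sab := sumsq n (fun i => a (Fin.FS i) + b (Fin.FS i))) in *.
    set (A := a Fin.F1). set (B := b Fin.F1).
    assert (0 <= Sa) by apply sumsq_nonneg.
    assert (0 <= Sb) by apply sumsq_nonneg.
    assert (0 <= Sab) by apply sumsq_nonneg.
    pose proof (sqrt_tri2 A B (sqrt Sa) (sqrt Sb) (sqrt_pos _) (sqrt_pos _)) as H2.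
    rewrite !pow2_sqrt in H2 by lra.
    assert (HY : 0 <= sqrt (A ^ 2 + Sa)) by apply sqrt_pos.
    assert (HZ : 0 <= sqrt (B ^ 2 + Sb)) by apply sqrt_pos.
    rewrite <- (sqrt_square (sqrt (A ^ 2 + Sa) + sqrt (B ^ 2 + Sb))) by lra.
    apply sqrt_le_1_alt.
    assert (Sab <= (sqrt Sa + sqrt Sb)^2).
    { rewrite <- (pow2_sqrt Sab) by lra. pose proof (sqrt_pos Sab). nra. }
    assert (E1: sqrt (A ^ 2 + Sa) * sqrt (A ^ 2 + Sa) = A^2 + Sa) by (apply sqrt_sqrt; nra).
    assert (E2: sqrt (B ^ 2 + Sb) * sqrt (B ^ 2 + Sb) = B^2 + Sb) by (apply sqrt_sqrt; nra).
    assert (E3: sqrt Sa * sqrt Sa = Sa) by (apply sqrt_sqrt; nra).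
    assert (E4: sqrt Sb * sqrt Sb = Sb) by (apply sqrt_sqrt; nra).
    nra.
Qed.

Lemma vnorm_tri n (a b : Vec n) : vnorm (vadd a b) <= vnorm a + vnorm b.
Proof. apply sumsq_tri. Qed.

Lemma vdist_tri n (a b c : Vec n) : vdist a c <= vdist a b + vdist b c.
Proof.
  unfold vdist. replace (vsub a c) with (vadd (vsub a b) (vsub b c)).
  apply vnorm_tri. apply functional_extensionality; intro i; unfold vadd, vsub; ring.
Qed.

Lemma vdist_sym n (a b : Vec n) : vdist a b = vdist b a.
Proof.
  unfold vdist. replace (vsub a b) with (vscal (-1) (vsub b a)).
  rewrite vnorm_scal. assert (Rabs (-1) = 1) as -> by (unfold Rabs; destruct Rcase_abs; lra). ring.
  apply functional_extensionality; intro i; unfold vscal, vsub; ring.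
Qed.

Lemma vdist_refl n (a : Vec n) : vdist a a = 0.
Proof.
  unfold vdist. replace (vsub a a) with (@vzero n). apply vnorm_zero.
  apply functional_extensionality; intro i; unfold vzero, vsub; ring.
Qed.

Lemma vnorm_le_dist n (a b : Vec n) : vnorm a <= vdist a b + vnorm b.
Proof.
  unfold vdist. replace a with (vadd (vsub a b) b) at 1. apply vnorm_tri.
  apply functional_extensionality; intro i; unfold vadd, vsub; ring.
Qed.

Definition leftcont (w : R -> R) (p : R) : Prop :=
  forall eps, 0 < eps -> exists del, 0 < del /\
    forall u, p - del < u <= p -> Rabs (w u - w p) < eps.

Lemma exp_near1 d : Rabs d <= /2 -> Rabs (exp d - 1) <= 2 * Rabs d.
Proof.
  intros Hd. pose proof (exp_ineq1_le d). pose proof (exp_ineq1_le (-d)).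
  pose proof (exp_pos d).
  rewrite exp_Ropp in H0.
  assert (exp d * (1 - d) <= 1).
  { assert (1 + - d <= / exp d) by lra.
    apply Rmult_le_compat_l with (r := exp d) in H2; [|lra].
    rewrite Rinv_r in H2 by lra. lra. }
  unfold Rabs in *. destruct (Rcase_abs (exp d - 1)); destruct (Rcase_abs d); nra.
Qed.

Lemma exp_cont y0 eps : 0 < eps -> exists del, 0 < del /\
  forall y, Rabs (y - y0) < del -> Rabs (exp y - exp y0) < eps.
Proof.
  intros He. pose proof (exp_pos y0).
  exists (Rmin (/2) (eps / (2 * exp y0 + 1))). split.
  { apply Rmin_pos. lra. apply Rdiv_lt_0_compat; lra. }
  intros y Hy.
  assert (H1 : Rabs (y - y0) <= /2) by (pose proof (Rmin_l (/2) (eps / (2 * exp y0 + 1))); lra).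
  assert (H2 : Rabs (y - y0) < eps / (2 * exp y0 + 1)) by (pose proof (Rmin_r (/2) (eps / (2 * exp y0 + 1))); lra).
  pose proof (exp_near1 _ H1).
  replace (exp y - exp y0) with (exp y0 * (exp (y - y0) - 1)).
  2:{ replace y with (y0 + (y - y0)) at 2 by ring. rewrite exp_plus. ring. }
  rewrite Rabs_mult, (Rabs_right (exp y0)) by lra.
  apply Rmult_lt_compat_r with (r := 2 * exp y0 + 1) in H2; [|lra].
  unfold Rdiv in H2. rewrite Rmult_assoc, Rinv_l in H2 by lra.
  pose proof (Rabs_pos (y - y0)). nra.
Qed.

Lemma leftcont_expaff G0 c' a p : leftcont (fun u => G0 * exp (- c' * (u - a))) p.
Proof.
  intros eps He.
  destruct (exp_cont (- c' * (p - a)) (eps / (Rabs G0 + 1))) as [d [Hd H]].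
  { apply Rdiv_lt_0_compat. lra. pose proof (Rabs_pos G0); lra. }
  exists (d / (Rabs c' + 1)). split. { apply Rdiv_lt_0_compat. lra. pose proof (Rabs_pos c'); lra. }
  intros u Hu.
  assert (Rabs (- c' * (u - a) - - c' * (p - a)) < d).
  { replace (- c' * (u - a) - - c' * (p - a)) with (c' * (p - u)) by ring.
    rewrite Rabs_mult, (Rabs_right (p - u)) by lra.
    assert (p - u < d / (Rabs c' + 1)) by lra.
    apply Rmult_lt_compat_r with (r := Rabs c' + 1) in H0; [|pose proof (Rabs_pos c'); lra].
    unfold Rdiv in H0. rewrite Rmult_assoc, Rinv_l in H0 by (pose proof (Rabs_pos c'); lra).
    pose proof (Rabs_pos c'). nra. }
  specialize (H _ H0).
  replace (G0 * exp (- c' * (u - a)) - G0 * exp (- c' * (p - a))) with (G0 * (exp (- c' * (u - a)) - exp (- c' * (p - a)))) by ring.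
  rewrite Rabs_mult.
  assert (Rabs G0 + 1 > 0) by (pose proof (Rabs_pos G0); lra).
  assert (Rabs (exp (- c' * (u - a)) - exp (- c' * (p - a))) * (Rabs G0 + 1) < eps).
  { apply Rmult_lt_compat_r with (r := Rabs G0 + 1) in H; [|lra].
    unfold Rdiv in H. rewrite Rmult_assoc, Rinv_l in H by lra. lra. }
  pose proof (Rabs_pos G0). pose proof (Rabs_pos (exp (- c' * (u - a)) - exp (- c' * (p - a)))). nra.
Qed.

Lemma LL (w G : R -> R) p d0 : 0 < d0 -> leftcont w p -> leftcont G p ->
  (forall u, p - d0 < u < p -> w u <= G u) -> w p <= G p.
Proof.
  intros Hd0 Hw HG H. destruct (Rle_dec (w p) (G p)) as [|Hn]; auto.
  exfalso. set (gap := w p - G p).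
  destruct (Hw (gap/2)) as [d1 [Hd1 H1]]. unfold gap; lra.
  destruct (HG (gap/2)) as [d2 [Hd2 H2]]. unfold gap; lra.
  set (m := Rmin d0 (Rmin d1 d2)).
  assert (0 < m) by (unfold m; repeat apply Rmin_pos; lra).
  assert (m <= d0) by (unfold m; apply Rmin_l).
  assert (m <= d1) by (unfold m; eapply Rle_trans; [apply Rmin_r| apply Rmin_l]).
  assert (m <= d2) by (unfold m; eapply Rle_trans; [apply Rmin_r| apply Rmin_r]).
  specialize (H1 (p - m/2) ltac:(lra)). specialize (H2 (p - m/2) ltac:(lra)).
  specialize (H (p - m/2) ltac:(lra)).
  unfold gap in *. apply Rabs_def2 in H1. apply Rabs_def2 in H2. lra.
Qed.

Lemma cmp (w : R -> R) a b c c' G0 : a < b -> c' < c -> 0 < G0 -> w a <= G0 ->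
  (forall t, a < t < b -> leftcont w t) ->
  (forall t, a <= t < b -> forall eps, 0 < eps -> exists del, 0 < del /\
     forall h, 0 < h < del -> h < b - t -> (w (t + h) - w t) / h <= - c * w t + eps) ->
  forall t, a <= t < b -> w t <= G0 * exp (- c' * (t - a)).
Proof.
  intros Hab Hc HG0 Ha Hlc Hd.
  set (G := fun u => G0 * exp (- c' * (u - a))).
  change (forall t, a <= t < b -> w t <= G t).
  set (E := fun r => a <= r <= b /\ forall s, a <= s <= r -> s < b -> w s <= G s).
  assert (HE : exists x, E x).
  { exists a. split. lra. intros s Hs _. replace s with a by lra. unfold G.
    replace (- c' * (a - a)) with 0 by ring. rewrite exp_0. lra. }
  assert (HB : bound E) by (exists b; intros r [Hr _]; lra).
  destruct (completeness E HB HE) as [r [Hub Hlub]].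
  assert (Har : a <= r) by (apply Hub; destruct HE; unfold E; split; [lra|]; intros s Hs _; replace s with a by lra; unfold G; replace (- c' * (a - a)) with 0 by ring; rewrite exp_0; lra).
  assert (Hrb : r <= b) by (apply Hlub; intros x [Hx _]; lra).
  assert (KEY1 : forall s, a <= s < r -> s < b -> w s <= G s).
  { intros s Hs Hsb. destruct (classic (exists x, E x /\ s < x)) as [[x [[_ Hx] Hsx]]|Hno].
    - apply Hx; lra.
    - exfalso. assert (r <= s). { apply Hlub. intros x Hx. destruct (Rle_dec x s); auto.
        exfalso; apply Hno; exists x; split; auto; lra. } lra. }
  assert (Hrb' : r >= b).
  { destruct (Rle_dec b r) as [|Hlt]; [lra|]. exfalso.
    assert (Hwr : w r <= G r).
    { destruct (Req_dec r a) as [->|Hne].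
      - unfold G. replace (- c' * (a - a)) with 0 by ring. rewrite exp_0. lra.
      - apply (LL w G r (r - a)). lra. apply Hlc; lra. apply leftcont_expaff.
        intros u Hu. apply KEY1; lra. }
    assert (HGr : 0 < G r) by (unfold G; pose proof (exp_pos (- c' * (r - a))); nra).
    destruct (Hd r ltac:(lra) ((c - c') * G r / 2)) as [del [Hdel Hdini]].
    { apply Rmult_lt_0_compat. nra. lra. }
    set (h0 := Rmin (Rmin del (/(Rabs c + 1))) (b - r)).
    assert (Hc1 : 0 < / (Rabs c + 1)) by (apply Rinv_0_lt_compat; pose proof (Rabs_pos c); lra).
    assert (Hh0 : 0 < h0) by (unfold h0; repeat apply Rmin_pos; lra).
    assert (Hh0a : h0 <= del) by (unfold h0; eapply Rle_trans; [apply Rmin_l|apply Rmin_l]).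
    assert (Hh0b : h0 <= / (Rabs c + 1)) by (unfold h0; eapply Rle_trans; [apply Rmin_l|apply Rmin_r]).
    assert (Hh0c : h0 <= b - r) by (unfold h0; apply Rmin_r).
    assert (Hstep : forall h, 0 < h < h0 -> w (r + h) <= G (r + h)).
    { intros h Hh. specialize (Hdini h ltac:(lra) ltac:(lra)).
      assert (Hw1 : w (r + h) - w r <= h * (- c * w r + (c - c') * G r / 2)).
      { apply Rmult_le_compat_l with (r := h) in Hdini; [|lra].
        unfold Rdiv in Hdini. rewrite <- Rmult_assoc, (Rmult_comm h), Rmult_assoc, Rinv_r, Rmult_1_r in Hdini by lra.
        lra. }
      assert (HGe : G r * (1 - c' * h) <= G (r + h)).
      { unfold G. replace (- c' * (r + h - a)) with (- c' * (r - a) + - c' * h) by ring.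
        rewrite exp_plus. pose proof (exp_ineq1_le (- c' * h)). pose proof (exp_pos (- c' * (r - a))).
        assert (0 < G0 * exp (- c' * (r - a))) by (apply Rmult_lt_0_compat; lra).
        replace (G0 * (exp (- c' * (r - a)) * exp (- c' * h))) with ((G0 * exp (- c' * (r - a))) * exp (- c' * h)) by ring.
        apply Rmult_le_compat_l; lra. }
      assert (Hch : c * h < 1).
      { assert (Rabs c * h < 1).
        { assert (Hhl : h < / (Rabs c + 1)) by lra.
          apply Rmult_lt_compat_l with (r := Rabs c + 1) in Hhl.
          2:{ pose proof (Rabs_pos c); lra. }
          rewrite Rinv_r in Hhl by (pose proof (Rabs_pos c); lra).
          pose proof (Rabs_pos c). nra. }
        pose proof (Rle_abs c). nra. }
      assert (0 <= (G r - w r) * (1 - c * h)) by (apply Rmult_le_pos; lra).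
      assert (0 <= h * ((c - c') * G r / 2)) by (apply Rmult_le_pos; [lra|]; apply Rmult_le_pos; nra).
      nra. }
    assert (Er : E (r + h0 / 2)).
    { split. lra. intros s Hs Hsb. destruct (Rlt_le_dec s r).
      - apply KEY1; lra.
      - destruct (Req_dec s r) as [->|]. auto.
        replace s with (r + (s - r)) by ring. apply Hstep. lra. }
    specialize (Hub _ Er). lra. }
  intros t Ht. apply KEY1; lra.
Qed.

Lemma cmp_closed (w : R -> R) a b c c' G0 : a < b -> c' < c -> 0 < G0 -> w a <= G0 ->
  (forall t, a < t <= b -> leftcont w t) ->
  (forall t, a <= t < b -> forall eps, 0 < eps -> exists del, 0 < del /\
     forall h, 0 < h < del -> h < b - t -> (w (t + h) - w t) / h <= - c * w t + eps) ->
  forall t, a <= t <= b -> w t <= G0 * exp (- c' * (t - a)).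
Proof.
  intros Hab Hc HG0 Ha Hlc Hd t Ht.
  destruct (Req_dec t b) as [->|Hne].
  - apply (LL w (fun u => G0 * exp (- c' * (u - a))) b (b - a)). lra. apply Hlc; lra.
    apply leftcont_expaff. intros u Hu. apply (cmp w a b c c' G0); auto.
    intros; apply Hlc; lra. lra.
  - apply (cmp w a b c c' G0); auto. intros; apply Hlc; lra. lra.
Qed.

Lemma leftcont_ext (w w' : R -> R) t d0 : 0 < d0 -> leftcont w t ->
  (forall u, t - d0 < u <= t -> w' u = w u) -> leftcont w' t.
Proof.
  intros Hd0 Hw Heq eps He. destruct (Hw eps He) as [d [Hd H]].
  exists (Rmin d d0). split. apply Rmin_pos; lra. intros u Hu.
  pose proof (Rmin_l d d0). pose proof (Rmin_r d d0).
  rewrite !Heq by lra. apply H. lra.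
Qed.

Lemma leftcont_plus (w1 w2 : R -> R) t : leftcont w1 t -> leftcont w2 t ->
  leftcont (fun u => w1 u + w2 u) t.
Proof.
  intros H1 H2 eps He. destruct (H1 (eps/2) ltac:(lra)) as [d1 [Hd1 K1]].
  destruct (H2 (eps/2) ltac:(lra)) as [d2 [Hd2 K2]].
  exists (Rmin d1 d2). split. apply Rmin_pos; lra. intros u Hu.
  pose proof (Rmin_l d1 d2). pose proof (Rmin_r d1 d2).
  specialize (K1 u ltac:(lra)). specialize (K2 u ltac:(lra)).
  replace (w1 u + w2 u - (w1 t + w2 t)) with ((w1 u - w1 t) + (w2 u - w2 t)) by ring.
  eapply Rle_lt_trans. apply Rabs_triang. lra.
Qed.

Lemma PC_bounded n tau (psi : R -> Vec n) : 0 < tau -> PC tau psi ->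
  exists B, forall s, vnorm (psi s) <= B.
Proof.
  intros Htau [Hout [Hrc [Hll _]]].
  set (E := fun r => -tau <= r <= 0 /\ exists B, forall s, -tau <= s <= r -> vnorm (psi s) <= B).
  assert (HE : E (-tau)).
  { split. lra. exists (vnorm (psi (-tau))). intros s Hs. replace s with (-tau) by lra. lra. }
  assert (HB : bound E) by (exists 0; intros r [Hr _]; lra).
  destruct (completeness E HB (ex_intro _ _ HE)) as [r [Hub Hlub]].
  assert (Hr1 : -tau <= r) by (apply Hub; auto).
  assert (Hr2 : r <= 0) by (apply Hlub; intros x [Hx _]; lra).
  assert (Hbr : exists B, forall s, -tau <= s <= r -> vnorm (psi s) <= B).
  { destruct (Req_dec r (-tau)) as [->|Hne].
    - exists (vnorm (psi (-tau))). intros s Hs. replace s with (-tau) by lra. lra.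
    - destruct (Hll r ltac:(lra)) as [L HL]. destruct (HL 1 ltac:(lra)) as [d [Hd HdL]].
      destruct (classic (exists x, E x /\ r - d < x)) as [[x [[Hx1 [B1 HB1]] Hx2]]|Hno].
      2:{ exfalso. assert (r <= r - d). { apply Hlub. intros x Hx. destruct (Rle_dec x (r - d)); auto.
            exfalso; apply Hno; exists x; split; auto; lra. } lra. }
      assert (x <= r) by (apply Hub; split; [lra| exists B1; auto]).
      exists (Rmax B1 (Rmax (vnorm L + 1) (vnorm (psi r)))). intros s Hs.
      destruct (Rle_dec s x). { eapply Rle_trans; [apply HB1; lra| apply Rmax_l]. }
      destruct (Req_dec s r) as [->|]. { eapply Rle_trans; [|apply Rmax_r]. apply Rmax_r. }
      eapply Rle_trans; [|apply Rmax_r]. eapply Rle_trans; [|apply Rmax_l].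
      specialize (HdL s ltac:(lra)). pose proof (vnorm_le_dist _ (psi s) L). lra. }
  destruct Hbr as [B HBr].
  assert (Hr0 : r = 0).
  { destruct (Req_dec r 0); auto. exfalso.
    destruct (Hrc r ltac:(lra) 1 ltac:(lra)) as [d [Hd Hdr]].
    set (r' := r + Rmin d (-r) / 2).
    assert (0 < Rmin d (-r)) by (apply Rmin_pos; lra).
    assert (Rmin d (-r) <= d) by apply Rmin_l. assert (Rmin d (-r) <= -r) by apply Rmin_r.
    assert (HEr : E r').
    { split. unfold r'; lra. exists (Rmax B (vnorm (psi r) + 1)). intros s Hs.
      destruct (Rle_dec s r). { eapply Rle_trans; [apply HBr; lra| apply Rmax_l]. }
      eapply Rle_trans; [|apply Rmax_r]. specialize (Hdr s ltac:(unfold r' in *; lra) ltac:(unfold r' in *; lra)).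
      pose proof (vnorm_le_dist _ (psi s) (psi r)). lra. }
    specialize (Hub _ HEr). unfold r' in Hub. lra. }
  subst r. exists (Rmax B 0). intros s. destruct (classic (-tau <= s <= 0)).
  - eapply Rle_trans; [apply HBr; auto| apply Rmax_l].
  - rewrite Hout by auto. rewrite vnorm_zero. apply Rmax_r.
Qed.

Lemma supnorm_ge n tau (psi : R -> Vec n) : 0 < tau -> PC tau psi ->
  forall s, vnorm (psi s) <= supnorm tau psi.
Proof.
  intros Htau HPC. destruct (PC_bounded n tau psi Htau HPC) as [B HB].
  unfold supnorm.
  set (E := fun r => exists s, -tau <= s <= 0 /\ r = vnorm (psi s)).
  destruct (Lub_Rbar_correct E) as [Hub Hlub].
  assert (H1 : forall s, -tau <= s <= 0 -> Rbar_le (vnorm (psi s)) (Lub_Rbar E)).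
  { intros s Hs. apply Hub. exists s; auto. }
  assert (H2 : Rbar_le (Lub_Rbar E) B).
  { apply Hlub. intros x [s [Hs ->]]. simpl. auto. }
  specialize (H1 0 ltac:(lra)).
  destruct (Lub_Rbar E) as [l| |]; simpl in *; try contradiction.
  intros s. destruct (classic (-tau <= s <= 0)).
  - assert (Rbar_le (vnorm (psi s)) l) by (apply Hub; exists s; auto). simpl in H0. auto.
  - destruct HPC as [Hout _]. rewrite Hout by auto. rewrite vnorm_zero. pose proof (vnorm_nonneg _ (psi 0)). lra.
Qed.

Lemma rd_rcont n (x : R -> Vec n) t v : right_deriv x t v ->
  forall eps, 0 < eps -> exists del, 0 < del /\ forall u, t <= u < t + del -> vdist (x u) (x t) < eps.
Proof.
  intros Hrd eps He. destruct (Hrd 1 ltac:(lra)) as [d [Hd H]].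
  set (m := Rmin d (eps / (2 * (vnorm v + 1)))).
  assert (Hv : 0 <= vnorm v) by apply vnorm_nonneg.
  assert (Hq : 0 < eps / (2 * (vnorm v + 1))) by (apply Rdiv_lt_0_compat; lra).
  assert (0 < m) by (apply Rmin_pos; lra).
  exists m. split; auto. intros u Hu.
  destruct (Req_dec u t) as [->|Hne]. { rewrite vdist_refl. lra. }
  set (h := u - t). assert (Hh : 0 < h < d) by (unfold h; pose proof (Rmin_l d (eps / (2 * (vnorm v + 1)))) as Hm1; fold m in Hm1; lra).
  assert (Hh2 : h < eps / (2 * (vnorm v + 1))) by (unfold h; pose proof (Rmin_r d (eps / (2 * (vnorm v + 1)))) as Hm1; fold m in Hm1; lra).
  specialize (H h Hh). replace (t + h) with u in H by (unfold h; ring).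
  pose proof (vnorm_le_dist _ (vsub (x u) (x t)) (vscal h v)) as Ht.
  unfold vdist at 1 in Ht. rewrite vnorm_scal in Ht. rewrite Rabs_right in Ht by lra.
  unfold vdist. 
  assert (h * (2 * (vnorm v + 1)) < eps).
  { apply Rmult_lt_compat_r with (r := 2 * (vnorm v + 1)) in Hh2; [|lra].
    unfold Rdiv in Hh2. rewrite Rmult_assoc, Rinv_l in Hh2 by lra. lra. }
  nra.
Qed.

Lemma PRC_const n (y : Vec n) : PRC vdist (fun _ => y).
Proof.
  split; [|split].
  - intros t eps He. exists 1. split. lra. intros. rewrite vdist_refl. auto.
  - intros t. exists y. intros eps He. exists 1. split. lra. intros. rewrite vdist_refl. auto.
  - intros a b. exists nil. intros t _ _ eps He. exists 1. split. lra. intros. rewrite vdist_refl. auto.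
Qed.

Lemma PC_seg n tau (z : R -> Vec n) t : 0 < tau -> PRC vdist z -> PC tau (seg tau z t).
Proof.
  intros Htau [Hrc [Hll Hfin]]. unfold seg. split; [|split; [|split]].
  - intros s Hs. destruct (Rle_dec (-tau) s); auto. destruct (Rle_dec s 0); auto. exfalso; auto.
  - intros s Hs eps He. destruct (Hrc (t + s) eps He) as [d [Hd H]]. exists d. split; auto.
    intros u Hu Hu0. destruct (Rle_dec (-tau) u); [|lra]. destruct (Rle_dec u 0); [|lra].
    destruct (Rle_dec (-tau) s); [|lra]. destruct (Rle_dec s 0); [|lra]. apply H; lra.
  - intros s Hs. destruct (Hll (t + s)) as [L HL]. exists L. intros eps He.
    destruct (HL eps He) as [d [Hd H]]. exists (Rmin d (s + tau)). split. apply Rmin_pos; lra.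
    intros u Hu. pose proof (Rmin_l d (s + tau)). pose proof (Rmin_r d (s + tau)).
    destruct (Rle_dec (-tau) u); [|lra]. destruct (Rle_dec u 0); [|lra]. apply H; lra.
  - destruct (Hfin (t - tau) t) as [l Hl]. exists (map (fun r => r - t) l).
    intros s Hs Hn eps He.
    assert (Hnl : ~ In (t + s) l). { intro Hi. apply Hn. apply in_map_iff. exists (t + s). split; auto; ring. }
    destruct (Hl (t + s) ltac:(lra) Hnl eps He) as [d [Hd H]].
    set (m := Rmin d (Rmin (s + tau) (- s))).
    assert (0 < m) by (unfold m; repeat apply Rmin_pos; lra).
    assert (m <= d) by apply Rmin_l.
    assert (m <= s + tau) by (unfold m; eapply Rle_trans; [apply Rmin_r|apply Rmin_l]).
    assert (m <= - s) by (unfold m; eapply Rle_trans; [apply Rmin_r|apply Rmin_r]).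
    exists m. split; auto. intros u Hu. apply Rabs_def2 in Hu.
    destruct (Rle_dec (-tau) u); [|lra]. destruct (Rle_dec u 0); [|lra].
    destruct (Rle_dec (-tau) s); [|lra]. destruct (Rle_dec s 0); [|lra]. apply H.
    replace (t + u - (t + s)) with (u - s) by ring. apply Rabs_def1; lra.
Qed.

Lemma seg_ext n tau (z x : R -> Vec n) u :
  (forall r, u - tau <= r <= u -> z r = x r) -> seg tau z u = seg tau x u.
Proof.
  intros H. apply functional_extensionality; intro s. unfold seg.
  destruct (Rle_dec (-tau) s); auto. destruct (Rle_dec s 0); auto. apply H; lra.
Qed.

Section Sol.
Variables (n : nat) (tau t0 : R) (tk : nat -> R) (f g : R -> (R -> Vec n) -> Vec n)
  (phi : R -> Vec n) (T : R) (x : R -> Vec n).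
Hypotheses (Htau : 0 < tau) (Htk0 : tk 0%nat = t0) (Htkinc : forall k, tk k < tk (S k))
  (Htkunb : forall M, exists k, M < tk k) (HPC : PC tau phi) (HT : 0 < T)
  (Hsol : IsSolOn tau tk f g t0 phi T x).

Lemma tk_lt i j : (i < j)%nat -> tk i < tk j.
Proof.
  intros H. induction H. apply Htkinc. specialize (Htkinc m). lra.
Qed.

Lemma tk_le i j : (i <= j)%nat -> tk i <= tk j.
Proof.
  intros H. destruct (Nat.eq_dec i j) as [->|]. lra. left. apply tk_lt. lia.
Qed.

Lemma tk_big q : exists K, forall k, (K <= k)%nat -> q < tk k.
Proof.
  destruct (Htkunb q) as [K HK]. exists K. intros k Hk. pose proof (tk_le K k Hk). lra.
Qed.

Lemma tk_index t : t0 <= t -> exists j, tk j <= t < tk (S j).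
Proof.
  intros Ht. destruct (Htkunb t) as [K HK]. revert HK. induction K; intros HK.
  - lra.
  - destruct (Rle_dec (tk K) t). exists K. lra. apply IHK. lra.
Qed.

Lemma x_init u : t0 - tau <= u <= t0 -> x u = phi (u - t0).
Proof.
  intros Hu. destruct Hsol as [H _]. rewrite <- H by lra. f_equal. ring.
Qed.

Definition xcut (e : R) (L : Vec n) (u : R) : Vec n :=
  if Rlt_dec u (t0 - tau) then x (t0 - tau) else if Rlt_dec u e then x u else L.

Lemma xcut_PRC e L : t0 < e <= t0 + T -> has_llim vdist x e L -> PRC vdist (xcut e L).
Proof.
  intros He HL. destruct Hsol as [Hin [Hrd [Hct Himp]]].
  destruct HPC as [Hout [Hrc [Hll [lpsi Hlp]]]].
  unfold xcut. split; [|split].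
  -
    intros t eps Heps.
    destruct (Rlt_dec t (t0 - tau)).
    + exists (t0 - tau - t). split. lra. intros u Hu. destruct (Rlt_dec u (t0 - tau)); [|lra]. rewrite vdist_refl; auto.
    + destruct (Rlt_dec t t0).
      * destruct (Hrc (t - t0) ltac:(lra) eps Heps) as [d [Hd H]].
        exists (Rmin d (t0 - t)). split. apply Rmin_pos; lra. intros u Hu.
        pose proof (Rmin_l d (t0 - t)). pose proof (Rmin_r d (t0 - t)).
        destruct (Rlt_dec u (t0 - tau)); [lra|]. destruct (Rlt_dec u e); [|lra].
        destruct (Rlt_dec t e); [|lra].
        rewrite !x_init by lra. apply H; lra.
      * destruct (Rlt_dec t e).
        -- destruct (rd_rcont _ x t _ (Hrd t ltac:(lra)) eps Heps) as [d [Hd H]].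
           exists (Rmin d (e - t)). split. apply Rmin_pos; lra. intros u Hu.
           pose proof (Rmin_l d (e - t)). pose proof (Rmin_r d (e - t)).
           destruct (Rlt_dec u (t0 - tau)); [lra|]. destruct (Rlt_dec u e); [|lra]. apply H; lra.
        -- exists 1. split. lra. intros u Hu.
           destruct (Rlt_dec u (t0 - tau)); [lra|]. destruct (Rlt_dec u e); [lra|]. rewrite vdist_refl; auto.
  -
    intros t.
    destruct (Rle_dec t (t0 - tau)).
    + exists (x (t0 - tau)). intros eps Heps. exists 1. split. lra. intros u Hu.
      destruct (Rlt_dec u (t0 - tau)); [|lra]. rewrite vdist_refl; auto.
    + destruct (Rle_dec t t0).
      * destruct (Hll (t - t0) ltac:(lra)) as [Lp HLp]. exists Lp. intros eps Heps.
        destruct (HLp eps Heps) as [d [Hd H]].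
        exists (Rmin d (t - (t0 - tau))). split. apply Rmin_pos; lra. intros u Hu.
        pose proof (Rmin_l d (t - (t0 - tau))). pose proof (Rmin_r d (t - (t0 - tau))).
        destruct (Rlt_dec u (t0 - tau)); [lra|]. destruct (Rlt_dec u e); [|lra].
        rewrite x_init by lra. apply H; lra.
      * destruct (Rlt_dec t e).
        -- assert (exists L', has_llim vdist x t L') as [L' HL'].
           { destruct (classic (exists k, tk k = t)) as [[k Hk]|Hnk].
             - subst t. destruct (Himp k ltac:(lra)) as [L' [HL' _]]. eauto.
             - exists (x t). intros eps Heps.
               destruct (Hct t ltac:(lra) (fun k Hk => Hnk (ex_intro _ k Hk)) eps Heps) as [d [Hd H]].
               exists d. split; auto. intros u Hu. apply H. apply Rabs_def1; lra. }
           exists L'. intros eps Heps. destruct (HL' eps Heps) as [d [Hd H]].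
           exists (Rmin d (t - t0)). split. apply Rmin_pos; lra. intros u Hu.
           pose proof (Rmin_l d (t - t0)). pose proof (Rmin_r d (t - t0)).
           destruct (Rlt_dec u (t0 - tau)); [lra|]. destruct (Rlt_dec u e); [|lra]. apply H; lra.
        -- destruct (Req_dec t e) as [->|Hne].
           ++ exists L. intros eps Heps. destruct (HL eps Heps) as [d [Hd H]].
              exists (Rmin d (e - t0)). split. apply Rmin_pos; lra. intros u Hu.
              pose proof (Rmin_l d (e - t0)). pose proof (Rmin_r d (e - t0)).
              destruct (Rlt_dec u (t0 - tau)); [lra|]. destruct (Rlt_dec u e); [|lra]. apply H; lra.
           ++ exists L. intros eps Heps. exists (t - e). split. lra. intros u Hu.
              destruct (Rlt_dec u (t0 - tau)); [lra|]. destruct (Rlt_dec u e); [lra|]. rewrite vdist_refl; auto.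
  -
    intros p q. destruct (tk_big q) as [K HK].
    exists ((t0 - tau) :: t0 :: e :: map (fun s => t0 + s) lpsi ++ map tk (seq 0 K)).
    intros t Ht Hn eps Heps.
    assert (Hn1 : t <> t0 - tau) by (intro; apply Hn; left; auto).
    assert (Hn2 : t <> t0) by (intro; apply Hn; right; left; auto).
    assert (Hn3 : t <> e) by (intro; apply Hn; right; right; left; auto).
    destruct (Rlt_dec t (t0 - tau)).
    + exists (t0 - tau - t). split. lra. intros u Hu. apply Rabs_def2 in Hu.
      destruct (Rlt_dec u (t0 - tau)); [|lra]. rewrite vdist_refl; auto.
    + destruct (Rlt_dec t t0).
      * assert (Hnl : ~ In (t - t0) lpsi).
        { intro Hi. apply Hn. right; right; right. apply in_or_app. left. apply in_map_iff.
          exists (t - t0). split; auto; ring. }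
        destruct (Hlp (t - t0) ltac:(lra) Hnl eps Heps) as [d [Hd H]].
        set (m := Rmin d (Rmin (t - (t0 - tau)) (t0 - t))).
        assert (0 < m) by (unfold m; repeat apply Rmin_pos; lra).
        assert (m <= d) by apply Rmin_l.
        assert (m <= t - (t0 - tau)) by (unfold m; eapply Rle_trans; [apply Rmin_r|apply Rmin_l]).
        assert (m <= t0 - t) by (unfold m; eapply Rle_trans; [apply Rmin_r|apply Rmin_r]).
        exists m. split; auto. intros u Hu. apply Rabs_def2 in Hu.
        destruct (Rlt_dec u (t0 - tau)); [lra|]. destruct (Rlt_dec u e); [|lra].
        destruct (Rlt_dec t (t0 - tau)); [lra|]. destruct (Rlt_dec t e); [|lra].
        rewrite !x_init by lra. apply H. replace (u - t0 - (t - t0)) with (u - t) by ring. apply Rabs_def1; lra.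
      * destruct (Rlt_dec t e).
        -- assert (Hnk : forall k, tk k <> t).
           { intros k Hk. destruct (Nat.lt_ge_cases k K).
             - apply Hn. right; right; right. apply in_or_app. right. apply in_map_iff. exists k. split; auto.
               apply in_seq. lia.
             - specialize (HK k H). lra. }
           destruct (Hct t ltac:(lra) Hnk eps Heps) as [d [Hd H]].
           set (m := Rmin d (Rmin (t - t0) (e - t))).
           assert (0 < m) by (unfold m; repeat apply Rmin_pos; lra).
           assert (m <= d) by apply Rmin_l.
           assert (m <= t - t0) by (unfold m; eapply Rle_trans; [apply Rmin_r|apply Rmin_l]).
           assert (m <= e - t) by (unfold m; eapply Rle_trans; [apply Rmin_r|apply Rmin_r]).
           exists m. split; auto. intros u Hu. pose proof Hu as Hu'. apply Rabs_def2 in Hu.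
           destruct (Rlt_dec u (t0 - tau)); [lra|]. destruct (Rlt_dec u e); [|lra].
           destruct (Rlt_dec t (t0 - tau)); [lra|]. destruct (Rlt_dec t e); [|lra].
           apply H. apply Rabs_def1; lra.
        -- exists (t - e). split. lra. intros u Hu. apply Rabs_def2 in Hu.
           destruct (Rlt_dec u (t0 - tau)); [lra|]. destruct (Rlt_dec u e); [lra|].
           destruct (Rlt_dec t (t0 - tau)); [lra|]. destruct (Rlt_dec t e); [lra|]. rewrite vdist_refl; auto.
Qed.

End Sol.

Lemma filter_len_true (p : nat -> bool) len : forall a,
  (forall k, (a <= k < a + len)%nat -> p k = true) -> length (filter p (seq a len)) = len.
Proof.
  induction len; intros a H; simpl; auto.
  rewrite H by lia. simpl. f_equal. apply IHlen. intros k Hk. apply H. lia.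
Qed.

Definition pN (tk : nat -> R) (t s : R) := (fun k => if Rlt_dec s (tk k) then
                                   if Rle_dec (tk k) t then true else false
                                 else false).

Lemma count_lower tk t s m i J : IsN tk t s m -> (i < J)%nat ->
  (forall k, (i < k <= J)%nat -> s < tk k <= t) -> (J - i <= m)%nat.
Proof.
  intros [K [HK Hm]] HiJ Hin. subst m.
  assert (HJK : (J < K)%nat).
  { destruct (Nat.lt_ge_cases J K); auto. specialize (HK J H). specialize (Hin J ltac:(lia)). lra. }
  replace K with (i + ((J - i) + (K - J)))%nat by lia.
  rewrite seq_app, seq_app, !filter_app, !length_app.
  rewrite (filter_len_true _ (J - i)). lia.
  intros k Hk. specialize (Hin k ltac:(lia)).
  destruct (Rlt_dec s (tk k)); [|lra]. destruct (Rle_dec (tk k) t); [|lra]. auto.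
Qed.

Lemma IsN_exists tk t s : (forall k, tk k < tk (S k)) -> (forall M, exists k, M < tk k) -> exists m, IsN tk t s m.
Proof.
  intros Hinc Hunb. destruct (Hunb t) as [K HK].
  assert (forall k, (K <= k)%nat -> t < tk k).
  { intros k Hk. induction Hk. auto. specialize (Hinc m). lra. }
  eexists. exists K. split. eauto. reflexivity.
Qed.

Section Main.
Variables (n : nat) (tau t0 : R) (tk : nat -> R)
  (f g : R -> (R -> Vec n) -> Vec n)
  (V1 : R -> Vec n -> R) (V2 : R -> (R -> Vec n) -> R)
  (a1 a2 a3 : R -> R) (c rho1 rho2 mu lam kap sigma : R).
Hypotheses (Htau : 0 < tau) (Ht0 : 0 <= t0) (Htk0 : tk 0%nat = t0)
  (Htkinc : forall k, tk k < tk (S k)) (Htkunb : forall M, exists k, M < tk k)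
  (HV1 : V0 V1) (HV2 : V0star tau V2) (Ha1 : Kinf a1) (Ha2 : Kinf a2) (Ha3 : Kinf a3)
  (Hr1 : 0 <= rho1) (Hr2 : 0 <= rho2) (Hmu : 0 <= mu) (Hlam : 0 < lam) (Hkap : 0 < kap).
Hypothesis Hcases :
     ((0 < c /\ 1 <= rho1 /\ sigma = - ln (rho1 + rho2 * exp (c * tau))) \/
      (0 < c /\ rho1 < 1 /\
         1 <= rho1 + ((1 - rho1) * kap + rho2) * exp (c * tau) /\
         sigma = - ln (rho1 + ((1 - rho1) * kap + rho2) * exp (c * tau))) \/
      (0 < c /\ rho1 < 1 /\
         rho1 + ((1 - rho1) * kap + rho2) * exp (c * tau) < 1 /\
         0 < sigma /\
         forall k m, IsN tk (tk k) (tk k - tau) m ->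
           rho1 * exp sigma + ((1 - rho1) * kap + rho2) * exp (c * tau)
             * exp (sigma * INR m) <= 1) \/
      (c <= 0 /\ rho1 < 1 /\ rho1 + (1 - rho1) * kap + rho2 < 1 /\
         0 < sigma /\
         forall k m, IsN tk (tk k) (tk k - tau) m ->
           rho1 * exp sigma + ((1 - rho1) * kap + rho2)
             * exp (sigma * INR m) <= 1)).

Let c' := c - lam / 2.

Definition coefcond (ph : R) :=
  (1 <= rho1 /\ rho1 + rho2 * exp ph <= exp (- sigma)) \/
  (rho1 < 1 /\ rho1 + ((1 - rho1) * kap + rho2) * exp ph <= exp (- sigma)).

Lemma ln_ge0 A : 1 <= A -> 0 <= ln A.
Proof. intros H. rewrite <- ln_1. destruct (Req_dec A 1) as [->|]. lra. left. apply ln_increasing; lra. Qed.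

Lemma exists_phi j : exists ph, 0 <= ph /\ coefcond ph /\
  (forall i r, (i <= j)%nat -> tk i <= r < tk (S i) -> tk (S j) - tau <= r -> r < tk (S j) ->
     - sigma * INR i - c' * (r - t0) <= - sigma * INR j - c' * (tk (S j) - t0) + ph) /\
  (tk (S j) - tau < t0 -> 0 <= - sigma * INR j - c' * (tk (S j) - t0) + ph).
Proof.
  assert (Hmono : forall i k, (i <= k)%nat -> tk i <= tk k).
  { intros i k H. induction H. lra. specialize (Htkinc m). lra. }
  assert (Hmono' : forall i k, (i < k)%nat -> tk i < tk k).
  { intros i k H. induction H. auto. specialize (Htkinc m). lra. }
  assert (Htj : t0 < tk (S j)) by (rewrite <- Htk0; apply Hmono'; lia).
  destruct (IsN_exists tk (tk (S j)) (tk (S j) - tau) Htkinc Htkunb) as [m Hm].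
  assert (Hcnt : forall i r, (i <= j)%nat -> tk i <= r < tk (S i) -> tk (S j) - tau <= r ->
             (S j - i <= m)%nat).
  { intros i r Hi Hr Hr2'. apply (count_lower tk (tk (S j)) (tk (S j) - tau) m i (S j) Hm). lia.
    intros k Hk. split. pose proof (Hmono (S i) k ltac:(lia)). lra. apply Hmono. lia. }
  assert (Hcnt0 : tk (S j) - tau < t0 -> (S j <= m)%nat).
  { intros H. replace (S j) with (S j - 0)%nat by lia.
    apply (count_lower tk (tk (S j)) (tk (S j) - tau) m 0 (S j) Hm). lia.
    intros k Hk. split. pose proof (Hmono 1%nat k ltac:(lia)). pose proof (Htkinc 0%nat). lra. apply Hmono. lia. }
  assert (Hm1 : (1 <= m)%nat).
  { replace 1%nat with (S j - j)%nat by lia.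
    apply (count_lower tk (tk (S j)) (tk (S j) - tau) m j (S j) Hm). lia.
    intros k Hk. replace k with (S j) by lia. lra. }
  assert (Hcc : forall r, tk (S j) - tau <= r -> r < tk (S j) -> 0 < c -> c' * (tk (S j) - r) <= c * tau).
  { intros r H1 H2 Hc. unfold c'. nra. }
  assert (Hcc0 : tk (S j) - tau < t0 -> 0 < c -> c' * (tk (S j) - t0) <= c * tau).
  { intros H1 Hc. unfold c'. nra. }
  assert (HINR : forall i, (i <= j)%nat -> INR i <= INR j) by (intros; apply le_INR; auto).
  assert (HINRp : forall i, 0 <= INR i) by apply pos_INR.
  destruct Hcases as [[Hc [H1 Hs]]|[[Hc [H1 [H2 Hs]]]|[[Hc [H1 [H2 [Hs Hk]]]]|[Hc [H1 [H2 [Hs Hk]]]]]]].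
  - assert (HA : 1 <= rho1 + rho2 * exp (c * tau)) by (pose proof (exp_pos (c * tau)); nra).
    pose proof (ln_ge0 _ HA). exists (c * tau). split. nra. split.
    + left. split; auto. rewrite Hs, Ropp_involutive, exp_ln by lra. lra.
    + split.
      * intros i r Hi Hr Hr1' Hr2'. specialize (Hcc r Hr1' Hr2' Hc). specialize (HINR i Hi). rewrite Hs. nra.
      * intros Hlt. specialize (Hcc0 Hlt Hc). rewrite Hs. pose proof (HINRp j). nra.
  - pose proof (ln_ge0 _ H2). exists (c * tau). split. nra. split.
    + right. split; auto. rewrite Hs, Ropp_involutive, exp_ln by lra. lra.
    + split.
      * intros i r Hi Hr Hr1' Hr2'. specialize (Hcc r Hr1' Hr2' Hc). specialize (HINR i Hi). rewrite Hs. nra.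
      * intros Hlt. specialize (Hcc0 Hlt Hc). rewrite Hs. pose proof (HINRp j). nra.
  - specialize (Hk (S j) m Hm).
    assert (HmR : 1 <= INR m) by (apply (le_INR 1 m) in Hm1; simpl in Hm1; lra).
    exists (c * tau + sigma * (INR m - 1)). split. nra. split.
    + right. split; auto.
      replace (exp (c * tau + sigma * (INR m - 1))) with (exp (c * tau) * exp (sigma * INR m) * exp (- sigma)).
      2:{ rewrite <- !exp_plus. f_equal. ring. }
      pose proof (exp_pos (- sigma)). 
      assert (exp sigma * exp (- sigma) = 1) by (rewrite <- exp_plus; replace (sigma + - sigma) with 0 by ring; apply exp_0).
      apply Rmult_le_compat_r with (r := exp (- sigma)) in Hk; [|lra].
      nra.
    + split.
      * intros i r Hi Hr Hr1' Hr2'. specialize (Hcc r Hr1' Hr2' Hc). specialize (Hcnt i r Hi Hr Hr1').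
        assert (INR (S j - i) <= INR m) by (apply le_INR; auto).
        rewrite minus_INR in H by lia. rewrite S_INR in H. nra.
      * intros Hlt. specialize (Hcc0 Hlt Hc). specialize (Hcnt0 Hlt).
        assert (INR (S j) <= INR m) by (apply le_INR; auto). rewrite S_INR in H. nra.
  - specialize (Hk (S j) m Hm).
    assert (HmR : 1 <= INR m) by (apply (le_INR 1 m) in Hm1; simpl in Hm1; lra).
    exists (sigma * (INR m - 1)). split. nra. split.
    + right. split; auto.
      replace (exp (sigma * (INR m - 1))) with (exp (sigma * INR m) * exp (- sigma)).
      2:{ rewrite <- !exp_plus. f_equal. ring. }
      pose proof (exp_pos (- sigma)). 
      assert (exp sigma * exp (- sigma) = 1) by (rewrite <- exp_plus; replace (sigma + - sigma) with 0 by ring; apply exp_0).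
      apply Rmult_le_compat_r with (r := exp (- sigma)) in Hk; [|lra].
      nra.
    + split.
      * intros i r Hi Hr Hr1' Hr2'. specialize (Hcnt i r Hi Hr Hr1').
        assert (INR (S j - i) <= INR m) by (apply le_INR; auto).
        rewrite minus_INR in H by lia. rewrite S_INR in H. unfold c'. nra.
      * intros Hlt. specialize (Hcnt0 Hlt).
        assert (INR (S j) <= INR m) by (apply le_INR; auto). rewrite S_INR in H. unfold c'. nra.
Qed.

End Main.

Lemma IsN_exact tk t0 j u : tk 0%nat = t0 -> (forall k, tk k < tk (S k)) ->
  tk j <= u < tk (S j) -> IsN tk u t0 j.
Proof.
  intros H0 Hinc Hu.
  assert (Hmono : forall i k, (i <= k)%nat -> tk i <= tk k).
  { intros i k H. induction H. lra. specialize (Hinc m). lra. }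
  exists (S j). split.
  - intros k Hk. pose proof (Hmono (S j) k Hk). lra.
  - rewrite seq_S, filter_app, length_app. rewrite filter_len_true.
    + simpl. destruct (Rlt_dec t0 (tk (S j))); simpl; [|lia].
      destruct (Rle_dec (tk (S j)) u); simpl; [|lia]. exfalso. lra.
    + intros k Hk. destruct (Rlt_dec t0 (tk k)).
      * destruct (Rle_dec (tk k) u); auto. exfalso. pose proof (Hmono k j ltac:(lia)). lra.
      * exfalso. pose proof (Hmono 1%nat k ltac:(lia)). pose proof (Hinc 0%nat). lra.
Qed.

Section Traj.
Variables (n : nat) (tau t0 : R) (tk : nat -> R)
  (f g : R -> (R -> Vec n) -> Vec n)
  (V1 : R -> Vec n -> R) (V2 : R -> (R -> Vec n) -> R)
  (a1 a2 a3 : R -> R) (c rho1 rho2 mu lam kap sigma : R).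
Hypotheses (Htau : 0 < tau) (Ht0 : 0 <= t0) (Htk0 : tk 0%nat = t0)
  (Htkinc : forall k, tk k < tk (S k)) (Htkunb : forall M, exists k, M < tk k)
  (HV1 : V0 V1) (HV2 : V0star tau V2) (Ha1 : Kinf a1) (Ha2 : Kinf a2) (Ha3 : Kinf a3)
  (Hr1 : 0 <= rho1) (Hr2 : 0 <= rho2) (Hmu : 0 <= mu) (Hlam : 0 < lam) (Hkap : 0 < kap).
Hypotheses
  (Hi1 : forall t (y : Vec n), a1 (vnorm y) <= V1 t y <= a2 (vnorm y))
  (Hi2 : forall t psi, 0 <= t -> PC tau psi ->
     0 <= V2 t psi <= a3 (supnorm tau psi))
  (Hii : forall t psi, 0 <= t -> PC tau psi ->
   forall T x, 0 < T -> IsSolOn tau tk f g t psi T x ->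
   forall eps, 0 < eps -> exists del, 0 < del /\
     forall h, 0 < h < del -> h < T ->
       (V1 (t + h) (x (t + h)) + V2 (t + h) (seg tau x (t + h))
        - (V1 t (psi 0) + V2 t psi)) / h
       <= - c * (V1 t (psi 0) + V2 t psi) + eps)
  (Hiii : forall t psi, 0 <= t -> PC tau psi ->
   forall L : R -> R,
     (forall s, -tau <= s <= 0 ->
        has_llim rdist (fun u => V1 u (psi s)) (t + s) (L s)) ->
   forall M, (forall s, -tau <= s <= 0 -> L s <= M) ->
     V1 t (vadd (psi 0) (g t psi)) <= rho1 * L 0 + rho2 * M)
  (Hiv : forall t psi, 0 <= t -> PC tau psi ->
   forall M, (forall s, -tau <= s <= 0 -> V1 (t + s) (psi s) <= M) ->
     V2 t psi <= kap * M).
Hypothesis Hcases :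
     ((0 < c /\ 1 <= rho1 /\ sigma = - ln (rho1 + rho2 * exp (c * tau))) \/
      (0 < c /\ rho1 < 1 /\
         1 <= rho1 + ((1 - rho1) * kap + rho2) * exp (c * tau) /\
         sigma = - ln (rho1 + ((1 - rho1) * kap + rho2) * exp (c * tau))) \/
      (0 < c /\ rho1 < 1 /\
         rho1 + ((1 - rho1) * kap + rho2) * exp (c * tau) < 1 /\
         0 < sigma /\
         forall k m, IsN tk (tk k) (tk k - tau) m ->
           rho1 * exp sigma + ((1 - rho1) * kap + rho2) * exp (c * tau)
             * exp (sigma * INR m) <= 1) \/
      (c <= 0 /\ rho1 < 1 /\ rho1 + (1 - rho1) * kap + rho2 < 1 /\
         0 < sigma /\
         forall k m, IsN tk (tk k) (tk k - tau) m ->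
           rho1 * exp sigma + ((1 - rho1) * kap + rho2)
             * exp (sigma * INR m) <= 1)).

Variables (phi : R -> Vec n) (T : R) (x : R -> Vec n) (eps0 : R).
Hypotheses (HPC : PC tau phi) (HT : 0 < T) (Hsol : IsSolOn tau tk f g t0 phi T x) (Heps0 : 0 < eps0).

Definition Vf (u : R) := V1 u (x u) + V2 u (seg tau x u).
Definition xc := xcut n tau t0 x.

Lemma PRCcut e L : t0 < e <= t0 + T -> has_llim vdist x e L -> PRC vdist (xc e L).
Proof. apply (xcut_PRC n tau t0 tk f g phi T x Htau Htkinc Htkunb HPC Hsol). Qed.

Lemma noimp j u k : tk j < u < tk (S j) -> tk k <> u.
Proof.
  intros Hu Hk. destruct (Nat.le_gt_cases k j).
  - pose proof (tk_le tk Htkinc k j H). lra.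
  - pose proof (tk_le tk Htkinc (S j) k H). lra.
Qed.

Lemma tk_ge0 k : t0 <= tk k.
Proof. rewrite <- Htk0. apply tk_le; auto. lia. Qed.

Lemma cut_exists s : t0 <= s < t0 + T -> exists e, s < e < t0 + T /\ (forall k, tk k <> e).
Proof.
  intros Hs. destruct (tk_index t0 tk Htk0 Htkunb s ltac:(lra)) as [j Hj].
  set (m := Rmin (tk (S j)) (t0 + T)).
  assert (m <= tk (S j)) by apply Rmin_l. assert (m <= t0 + T) by apply Rmin_r.
  assert (s < m) by (unfold m; apply Rmin_glb_lt; lra).
  exists ((s + m) / 2). split. lra. intros k. apply (noimp j). lra.
Qed.

Lemma x_cont e : t0 < e < t0 + T -> (forall k, tk k <> e) -> cont_at vdist x e.
Proof. intros He Hk. destruct Hsol as [_ [_ [H _]]]. apply H; auto. Qed.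

Lemma llim_of_cont e : cont_at vdist x e -> has_llim vdist x e (x e).
Proof.
  intros H eps He. destruct (H eps He) as [d [Hd K]]. exists d. split; auto.
  intros u Hu. apply K. apply Rabs_def1; lra.
Qed.

Lemma xc_eq e L u : t0 - tau <= u < e -> xc e L u = x u.
Proof.
  intros Hu. unfold xc, xcut. destruct (Rlt_dec u (t0 - tau)); [lra|].
  destruct (Rlt_dec u e); [auto|lra].
Qed.

Lemma seg_xc e L s : t0 <= s < e -> seg tau (xc e L) s = seg tau x s.
Proof. intros Hs. apply seg_ext. intros r Hr. apply xc_eq. lra. Qed.

Lemma cut_PRC s : t0 <= s < t0 + T -> exists e, s < e < t0 + T /\ (forall k, tk k <> e) /\
  PRC vdist (xc e (x e)).
Proof.
  intros Hs. destruct (cut_exists s Hs) as [e [He Hk]]. exists e. split; auto. split; auto.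
  apply PRCcut. lra. apply llim_of_cont. apply x_cont; auto. lra.
Qed.

Lemma PCseg s : t0 <= s < t0 + T -> PC tau (seg tau x s).
Proof.
  intros Hs. destruct (cut_PRC s Hs) as [e [He [_ Hz]]].
  rewrite <- (seg_xc e (x e) s) by lra. apply PC_seg; auto.
Qed.

Lemma V2nn s : t0 <= s < t0 + T -> 0 <= V2 s (seg tau x s).
Proof. intros Hs. apply Hi2. lra. apply PCseg; auto. Qed.

Lemma seg0 (z : R -> Vec n) t : seg tau z t 0 = z t.
Proof.
  unfold seg. destruct (Rle_dec (-tau) 0); [|lra]. destruct (Rle_dec 0 0); [|lra].
  rewrite Rplus_0_r. auto.
Qed.

Lemma seg_t0 : seg tau x t0 = phi.
Proof.
  apply functional_extensionality; intro s. unfold seg.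
  destruct HPC as [Hout _]. destruct Hsol as [Hin _].
  destruct (Rle_dec (-tau) s); [destruct (Rle_dec s 0)|].
  - apply Hin; lra.
  - symmetry; apply Hout; lra.
  - symmetry; apply Hout; lra.
Qed.

Lemma Dini t : t0 <= t < t0 + T -> forall eps, 0 < eps -> exists del, 0 < del /\
  forall h, 0 < h < del -> h < t0 + T - t -> (Vf (t + h) - Vf t) / h <= - c * Vf t + eps.
Proof.
  intros Ht eps He.
  assert (HS : IsSolOn tau tk f g t (seg tau x t) (t0 + T - t) x).
  { destruct Hsol as [H1 [H2 [H3 H4]]].
    replace (t + (t0 + T - t)) with (t0 + T) by ring.
    split; [|split; [|split]].
    - intros s Hs. unfold seg. destruct (Rle_dec (-tau) s); [|lra]. destruct (Rle_dec s 0); [|lra]. auto.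
    - intros t' Ht'. apply H2. lra.
    - intros t' Ht' Hk. apply H3; auto. lra.
    - intros k Hk. apply H4. lra. }
  destruct (Hii t (seg tau x t) ltac:(lra) (PCseg t Ht) (t0 + T - t) x ltac:(lra) HS eps He) as [d [Hd H]].
  exists d. split; auto. intros h Hh Hh2. specialize (H h Hh Hh2). rewrite seg0 in H. unfold Vf. auto.
Qed.

Lemma V1_leftcont (z : R -> Vec n) t : PRC vdist z -> cont_at vdist z t ->
  leftcont (fun u => V1 u (z u)) t.
Proof.
  intros Hz Hc. destruct HV1 as [_ HV]. destruct (HV z Hz) as [_ Hcc].
  specialize (Hcc t Hc). intros eps He. destruct (Hcc eps He) as [d [Hd K]].
  exists d. split; auto. intros u Hu. apply K. apply Rabs_def1; lra.
Qed.

Lemma V2_leftcont (z : R -> Vec n) t : PRC vdist z -> t0 < t ->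
  leftcont (fun u => V2 u (seg tau z u)) t.
Proof.
  intros Hz Ht. destruct HV2 as [_ [HV _]]. intros eps He.
  destruct (HV z Hz t ltac:(lra) eps He) as [d [Hd K]].
  exists (Rmin d (t - t0)). split. apply Rmin_pos; lra. intros u Hu.
  pose proof (Rmin_l d (t - t0)). pose proof (Rmin_r d (t - t0)).
  apply K. lra. apply Rabs_def1; lra.
Qed.

Lemma leftcont_V t : t0 < t < t0 + T -> (forall k, tk k <> t) -> leftcont Vf t.
Proof.
  intros Ht Hk. destruct (cut_PRC t ltac:(lra)) as [e [He [_ Hz]]].
  set (z := xc e (x e)) in *.
  assert (Hcz : cont_at vdist z t).
  { intros eps Heps. destruct (x_cont t Ht Hk eps Heps) as [d [Hd K]].
    exists (Rmin d (Rmin (t - t0) (e - t))). split. repeat apply Rmin_pos; lra.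
    intros u Hu. pose proof (Rmin_l d (Rmin (t - t0) (e - t))).
    pose proof (Rmin_r d (Rmin (t - t0) (e - t))). pose proof (Rmin_l (t - t0) (e - t)).
    pose proof (Rmin_r (t - t0) (e - t)). apply Rabs_def2 in Hu as Hu'.
    unfold z. rewrite !xc_eq by lra. apply K. lra. }
  apply (leftcont_ext (fun u => V1 u (z u) + V2 u (seg tau z u)) Vf t (t - t0)). lra.
  - apply leftcont_plus. apply V1_leftcont; auto. apply V2_leftcont; auto. lra.
  - intros u Hu. unfold Vf, z. rewrite xc_eq by lra. rewrite seg_xc by lra. auto.
Qed.


Lemma exp_mono a b : a <= b -> exp a <= exp b.
Proof. intros H. destruct (Req_dec a b) as [->|]. lra. left. apply exp_increasing. lra. Qed.

Lemma Kinf_mono (a : R -> R) y y' : Kinf a -> 0 <= y <= y' -> a y <= a y'.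
Proof.
  intros [_ [_ [Hm _]]] Hy. destruct (Req_dec y y') as [->|]. lra. left. apply Hm; lra.
Qed.

Lemma Kinf_nn (a : R -> R) y : Kinf a -> 0 <= y -> 0 <= a y.
Proof.
  intros Ha Hy. pose proof (Kinf_mono a 0 y Ha ltac:(lra)). destruct Ha as [H0 _]. lra.
Qed.

Definition M0 := V1 t0 (phi 0) + V2 t0 phi + a2 (supnorm tau phi) + eps0.
Definition Bf (j : nat) (u : R) := M0 * exp (- sigma * INR j - (c - lam / 2) * (u - t0)).

Lemma supnorm_nn : 0 <= supnorm tau phi.
Proof. pose proof (supnorm_ge n tau phi Htau HPC 0). pose proof (vnorm_nonneg _ (phi 0)). lra. Qed.

Lemma M0_pos : 0 < M0.
Proof.
  unfold M0. destruct HV1 as [Hnn _]. pose proof (Hnn t0 (phi 0)).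
  pose proof (Hi2 t0 phi Ht0 HPC). pose proof (Kinf_nn a2 _ Ha2 supnorm_nn). lra.
Qed.

Lemma Bf_pos j u : 0 < Bf j u.
Proof. unfold Bf. pose proof M0_pos. pose proof (exp_pos (- sigma * INR j - (c - lam / 2) * (u - t0))). nra. Qed.

Lemma Bf_shift j a u : Bf j a * exp (- (c - lam / 2) * (u - a)) = Bf j u.
Proof. unfold Bf. rewrite Rmult_assoc, <- exp_plus. f_equal. f_equal. ring. Qed.

Lemma claim_of_init j : (tk j < t0 + T -> Vf (tk j) <= Bf j (tk j)) ->
  forall u, tk j <= u < tk (S j) -> u < t0 + T -> Vf u <= Bf j u.
Proof.
  intros Hinit u Hu HuT.
  set (b := Rmin (tk (S j)) (t0 + T)).
  assert (Hb1 : b <= tk (S j)) by apply Rmin_l. assert (Hb2 : b <= t0 + T) by apply Rmin_r.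
  assert (Hub : u < b) by (unfold b; apply Rmin_glb_lt; lra).
  pose proof (tk_ge0 j) as Htj.
  rewrite <- (Bf_shift j (tk j) u).
  apply (cmp Vf (tk j) b c (c - lam / 2) (Bf j (tk j))); try lra.
  - exact (Bf_pos j (tk j)).
  - intros t Ht. apply leftcont_V. lra. intros k. apply (noimp j). lra.
  - intros t Ht eps He. destruct (Dini t ltac:(lra) eps He) as [d [Hd H]]. exists d. split; auto.
    intros h Hh Hh2. apply H; auto. lra.
Qed.

Lemma V1_const_llim (y : Vec n) t : has_llim rdist (fun u => V1 u y) t (V1 t y).
Proof.
  destruct HV1 as [_ HV]. destruct (HV (fun _ => y) (PRC_const n y)) as [_ Hc].
  assert (cont_at vdist (fun _ : R => y) t).
  { intros eps He. exists 1. split. lra. intros. rewrite vdist_refl. auto. }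
  specialize (Hc t H). intros eps He. destruct (Hc eps He) as [d [Hd K]].
  exists d. split; auto. intros u Hu. apply K. apply Rabs_def1; lra.
Qed.

Lemma init_S j : (forall i, (i <= j)%nat -> forall u, tk i <= u < tk (S i) -> u < t0 + T -> Vf u <= Bf i u) ->
  (tk j < t0 + T -> Vf (tk j) <= Bf j (tk j)) -> tk (S j) < t0 + T -> Vf (tk (S j)) <= Bf (S j) (tk (S j)).
Proof.
  intros IH Hinit HJT.
  pose proof (tk_ge0 j) as Htj0. pose proof (Htkinc j) as Htj.
  assert (HtJ0 : t0 < tk (S j)) by (rewrite <- Htk0; apply tk_lt; auto; lia).
  destruct Hsol as [_ [_ [_ Himp]]].
  destruct (Himp (S j) ltac:(lra)) as [Lj [HLj Hjump]].
  set (tJ := tk (S j)) in *.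
  assert (Hz : PRC vdist (xc tJ Lj)) by (apply PRCcut; auto; lra).
  set (z := xc tJ Lj) in *.
  set (psi := segm tau x tJ Lj) in *.
  assert (Hzt : z tJ = Lj).
  { unfold z, xc, xcut. destruct (Rlt_dec tJ (t0 - tau)); [lra|]. destruct (Rlt_dec tJ tJ); [lra|]. auto. }
  assert (Hpsi : seg tau z tJ = psi).
  { apply functional_extensionality; intro s. unfold seg, psi, segm.
    destruct (Rle_dec (-tau) s); auto. destruct (Rle_dec s 0).
    - destruct (Rlt_dec s 0). unfold z. apply xc_eq. lra.
      destruct (Req_EM_T s 0); [|lra]. subst s. rewrite Rplus_0_r. auto.
    - destruct (Rlt_dec s 0); [lra|]. destruct (Req_EM_T s 0); [lra|]. auto. }
  assert (HPCpsi : PC tau psi) by (rewrite <- Hpsi; apply PC_seg; auto).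
  assert (Hpsi0 : psi 0 = Lj).
  { unfold psi, segm. destruct (Rle_dec (-tau) 0); [|lra]. destruct (Rlt_dec 0 0); [lra|].
    destruct (Req_EM_T 0 0); [auto|lra]. }
  assert (Hcz : cont_at vdist z tJ).
  { intros eps He. destruct (HLj eps He) as [d [Hd K]].
    exists (Rmin d (tJ - t0)). split. apply Rmin_pos; lra. intros u Hu.
    pose proof (Rmin_l d (tJ - t0)). pose proof (Rmin_r d (tJ - t0)). apply Rabs_def2 in Hu.
    rewrite Hzt. destruct (Rlt_dec u tJ).
    - unfold z. rewrite xc_eq by lra. apply K. lra.
    - unfold z, xc, xcut. destruct (Rlt_dec u (t0 - tau)); [lra|]. destruct (Rlt_dec u tJ); [lra|].
      rewrite vdist_refl. auto. }
  set (ubar := fun u => V1 u (z u) + V2 u (seg tau z u)).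
  assert (Hueq : forall u, t0 <= u < tJ -> ubar u = Vf u).
  { intros u Hu. unfold ubar, Vf, z. rewrite xc_eq by lra. rewrite seg_xc by lra. auto. }
  assert (HutJ : ubar tJ = V1 tJ Lj + V2 tJ psi) by (unfold ubar; rewrite Hzt, Hpsi; auto).
  assert (Hubar : ubar tJ <= Bf j tJ).
  { rewrite <- (Bf_shift j (tk j) tJ).
    apply (cmp_closed ubar (tk j) tJ c (c - lam / 2) (Bf j (tk j))); try lra.
    - apply Bf_pos.
    - rewrite Hueq by lra. apply Hinit. lra.
    - intros t Ht. destruct (Req_dec t tJ) as [->|Hne].
      + apply leftcont_plus. apply V1_leftcont; auto. apply V2_leftcont; auto.
      + apply (leftcont_ext Vf ubar t (t - t0)). lra.
        apply leftcont_V. lra. intros k. apply (noimp j). fold tJ. lra.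
        intros u Hu. apply Hueq. lra.
    - intros t Ht eps He. destruct (Dini t ltac:(lra) eps He) as [d [Hd H]]. exists d. split; auto.
      intros h Hh Hh2. rewrite !Hueq by lra. apply H; auto. lra. }
  assert (HV2eq : V2 tJ (seg tau x tJ) = V2 tJ psi).
  { destruct (cut_PRC tJ ltac:(lra)) as [e' [He' [_ Hz']]].
    set (z' := xc e' (x e')) in *.
    set (h1 := fun u => V2 u (seg tau z u)). set (h2 := fun u => V2 u (seg tau z' u)).
    assert (Hagree : forall u, tJ - (tJ - t0) < u < tJ -> h1 u = h2 u).
    { intros u Hu. unfold h1, h2, z, z'. rewrite !seg_xc by lra. auto. }
    assert (L1 : h1 tJ <= h2 tJ).
    { apply (LL h1 h2 tJ (tJ - t0)). lra. apply V2_leftcont; auto. apply V2_leftcont; auto.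
      intros u Hu. rewrite Hagree by lra. lra. }
    assert (L2 : h2 tJ <= h1 tJ).
    { apply (LL h2 h1 tJ (tJ - t0)). lra. apply V2_leftcont; auto. apply V2_leftcont; auto.
      intros u Hu. rewrite Hagree by lra. lra. }
    unfold h1, h2 in *. rewrite Hpsi in L1, L2. unfold z' in L1, L2. rewrite seg_xc in L1, L2 by lra. lra. }
  destruct (exists_phi tau t0 tk c rho1 rho2 lam kap sigma Htau Htk0 Htkinc Htkunb Hr1 Hr2 Hlam Hcases j)
    as [ph [Hph0 [Hcoef [Hwin Hwin0]]]].
  fold tJ in Hwin, Hwin0.
  set (Bj := Bf j tJ) in *.
  set (Mw := exp ph * Bj).
  assert (Hexp1 : 1 <= exp ph) by (pose proof (exp_ineq1_le ph); lra).
  assert (HBj : 0 < Bj) by apply Bf_pos.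
  assert (HV2psi : 0 <= V2 tJ psi) by (apply Hi2; auto; lra).
  assert (Hbnd : forall s, -tau <= s <= 0 -> V1 (tJ + s) (psi s) <= Mw).
  { intros s Hs. destruct (Req_dec s 0) as [->|Hs0].
    - rewrite Rplus_0_r, Hpsi0. unfold Mw. nra.
    - assert (Hps : psi s = x (tJ + s)).
      { unfold psi, segm. destruct (Rle_dec (-tau) s); [|lra]. destruct (Rlt_dec s 0); [auto|lra]. }
      rewrite Hps. set (r := tJ + s).
      destruct (Rle_dec t0 r).
      + destruct (tk_index t0 tk Htk0 Htkunb r r0) as [i Hi].
        assert (Hij : (i <= j)%nat).
        { destruct (Nat.le_gt_cases i j); auto. pose proof (tk_le tk Htkinc (S j) i H). fold tJ in H0. unfold r in *. lra. }
        pose proof (IH i Hij r Hi ltac:(unfold r in *; lra)) as Hr.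
        pose proof (V2nn r ltac:(unfold r in *; lra)).
        unfold Vf in Hr. unfold Mw, Bj, Bf in *.
        pose proof (Hwin i r Hij Hi ltac:(unfold r; lra) ltac:(unfold r; lra)).
        pose proof (exp_mono _ _ H0). rewrite exp_plus in H1. pose proof M0_pos.
        pose proof (exp_pos (- sigma * INR i - (c - lam / 2) * (r - t0))). nra.
      + rewrite (x_init n tau t0 tk f g phi T x Hsol r) by (unfold r in *; lra).
        pose proof (Hi1 r (phi (r - t0))) as [_ H1].
        pose proof (supnorm_ge n tau phi Htau HPC (r - t0)).
        pose proof (Kinf_mono a2 _ _ Ha2 (conj (vnorm_nonneg _ (phi (r - t0))) H)).
        assert (a2 (supnorm tau phi) <= M0).
        { unfold M0. destruct HV1 as [Hnn _]. pose proof (Hnn t0 (phi 0)). pose proof (Hi2 t0 phi Ht0 HPC). lra. }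
        specialize (Hwin0 ltac:(unfold r in *; lra)).
        pose proof (exp_mono _ _ Hwin0). rewrite exp_0, exp_plus in H3.
        unfold Mw, Bj, Bf. pose proof M0_pos. nra. }
  assert (Hiiip := Hiii tJ psi ltac:(lra) HPCpsi (fun s => V1 (tJ + s) (psi s))
             (fun s _ => V1_const_llim (psi s) (tJ + s)) Mw Hbnd).
  simpl in Hiiip. rewrite Rplus_0_r, Hpsi0 in Hiiip. rewrite <- Hjump in Hiiip.
  pose proof (Hiv tJ psi ltac:(lra) HPCpsi Mw Hbnd) as Hivp.
  assert (HBS : Bf (S j) tJ = exp (- sigma) * Bj).
  { unfold Bj, Bf. rewrite S_INR.
    replace (- sigma * (INR j + 1) - (c - lam / 2) * (tJ - t0)) with
      ((- sigma * INR j - (c - lam / 2) * (tJ - t0)) + - sigma) by ring.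
    rewrite exp_plus. ring. }
  rewrite HBS. unfold Vf. rewrite HV2eq. rewrite HutJ in Hubar.
  destruct Hcoef as [[Hc1 Hc2]|[Hc1 Hc2]]; unfold Mw in *.
  - pose proof (exp_pos ph). nra.
  - pose proof (exp_pos ph). nra.
Qed.


Hypothesis Hv : forall t s m, t0 <= s < t -> IsN tk t s m ->
       - sigma * INR m - (c - lam) * (t - s) <= mu.

Lemma claims j : (tk j < t0 + T -> Vf (tk j) <= Bf j (tk j)) /\
  forall i, (i <= j)%nat -> forall u, tk i <= u < tk (S i) -> u < t0 + T -> Vf u <= Bf i u.
Proof.
  induction j.
  - assert (I0 : tk 0%nat < t0 + T -> Vf (tk 0%nat) <= Bf 0 (tk 0%nat)).
    { intros _. rewrite Htk0. unfold Vf, Bf. rewrite seg_t0.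
      destruct Hsol as [Hin _]. replace (x t0) with (phi 0) by (rewrite <- (Hin 0) by lra; f_equal; ring).
      simpl. replace (- sigma * 0 - (c - lam / 2) * (t0 - t0)) with 0 by ring. rewrite exp_0.
      unfold M0. pose proof (Kinf_nn a2 _ Ha2 supnorm_nn). lra. }
    split; auto. intros i Hi. replace i with 0%nat by lia. apply claim_of_init; auto.
  - destruct IHj as [Ij Cj].
    assert (IS : tk (S j) < t0 + T -> Vf (tk (S j)) <= Bf (S j) (tk (S j))).
    { intros H. apply init_S; auto. }
    split; auto. intros i Hi. destruct (Nat.eq_dec i (S j)) as [->|Hne].
    + apply claim_of_init; auto.
    + apply Cj. lia.
Qed.

Lemma final u : t0 <= u < t0 + T ->
  a1 (vnorm (x u)) <= M0 * exp mu * exp (- (lam / 2) * (u - t0)).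
Proof.
  intros Hu. destruct (tk_index t0 tk Htk0 Htkunb u ltac:(lra)) as [j Hj].
  destruct (claims j) as [_ Cj]. specialize (Cj j (Nat.le_refl j) u Hj ltac:(lra)).
  pose proof (Hi1 u (x u)) as [H1 _]. pose proof (V2nn u Hu). unfold Vf in Cj.
  assert (Hexp : - sigma * INR j - (c - lam) * (u - t0) <= mu).
  { destruct (Req_dec u t0) as [->|Hne].
    - assert (j = 0%nat).
      { destruct j; auto. exfalso. pose proof (tk_lt tk Htkinc 0 (S j) ltac:(lia)). lra. }
      subst j. simpl. lra.
    - apply (Hv u t0 j). lra. apply IsN_exact; auto. }
  unfold Bf in Cj.
  assert (E : - sigma * INR j - (c - lam / 2) * (u - t0) <= mu + - (lam / 2) * (u - t0)) by lra.
  pose proof (exp_mono _ _ E). rewrite exp_plus in H0. pose proof M0_pos.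
  assert (M0 * exp (- sigma * INR j - (c - lam / 2) * (u - t0)) <= M0 * (exp mu * exp (- (lam / 2) * (u - t0)))).
  { apply Rmult_le_compat_l; lra. }
  lra.
Qed.

End Traj.

Theorem theorem1
  (n : nat) (tau t0 : R) (tk : nat -> R)
  (f g : R -> (R -> Vec n) -> Vec n)
  (V1 : R -> Vec n -> R) (V2 : R -> (R -> Vec n) -> R)
  (a1 a2 a3 : R -> R) (c rho1 rho2 mu lam kap : R) :
  0 < tau -> 0 <= t0 ->
  tk 0%nat = t0 -> (forall k, tk k < tk (S k)) ->
  (forall M, exists k, M < tk k) ->
  (forall t, f t (fun _ => vzero) = vzero) ->
  (forall t, g t (fun _ => vzero) = vzero) ->
  WellPosed tau tk f g ->
  V0 V1 -> V0star tau V2 ->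
  Kinf a1 -> Kinf a2 -> Kinf a3 ->
  0 <= rho1 -> 0 <= rho2 -> 0 <= mu -> 0 < lam -> 0 < kap ->
  (* (i) *)
  (forall t (y : Vec n), a1 (vnorm y) <= V1 t y <= a2 (vnorm y)) ->
  (forall t psi, 0 <= t -> PC tau psi ->
     0 <= V2 t psi <= a3 (supnorm tau psi)) ->
  (* (ii) D^+ V(t,psi) <= - c V(t,psi), V(t,psi) = V1(t,psi(0)) + V2(t,psi) *)
  (forall t psi, 0 <= t -> PC tau psi ->
   forall T x, 0 < T -> IsSolOn tau tk f g t psi T x ->
   forall eps, 0 < eps -> exists del, 0 < del /\
     forall h, 0 < h < del -> h < T ->
       (V1 (t + h) (x (t + h)) + V2 (t + h) (seg tau x (t + h))
        - (V1 t (psi 0) + V2 t psi)) / h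
       <= - c * (V1 t (psi 0) + V2 t psi) + eps) ->
  (* (iii) ; L s = V1(t^- + s, psi(s)) *)
  (forall t psi, 0 <= t -> PC tau psi ->
   forall L : R -> R,
     (forall s, -tau <= s <= 0 ->
        has_llim rdist (fun u => V1 u (psi s)) (t + s) (L s)) ->
   forall M, (forall s, -tau <= s <= 0 -> L s <= M) ->
     V1 t (vadd (psi 0) (g t psi)) <= rho1 * L 0 + rho2 * M) ->
  (* (iv) *)
  (forall t psi, 0 <= t -> PC tau psi ->
   forall M, (forall s, -tau <= s <= 0 -> V1 (t + s) (psi s) <= M) ->
     V2 t psi <= kap * M) ->
  (* (v) *)
  (exists sigma : R,
     ((0 < c /\ 1 <= rho1 /\ sigma = - ln (rho1 + rho2 * exp (c * tau))) \/
      (0 < c /\ rho1 < 1 /\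
         1 <= rho1 + ((1 - rho1) * kap + rho2) * exp (c * tau) /\
         sigma = - ln (rho1 + ((1 - rho1) * kap + rho2) * exp (c * tau))) \/
      (0 < c /\ rho1 < 1 /\
         rho1 + ((1 - rho1) * kap + rho2) * exp (c * tau) < 1 /\
         0 < sigma /\
         forall k m, IsN tk (tk k) (tk k - tau) m ->
           rho1 * exp sigma + ((1 - rho1) * kap + rho2) * exp (c * tau)
             * exp (sigma * INR m) <= 1) \/
      (c <= 0 /\ rho1 < 1 /\ rho1 + (1 - rho1) * kap + rho2 < 1 /\
         0 < sigma /\
         forall k m, IsN tk (tk k) (tk k - tau) m ->
           rho1 * exp sigma + ((1 - rho1) * kap + rho2)
             * exp (sigma * INR m) <= 1)) /\
     forall t s m, t0 <= s < t -> IsN tk t s m ->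
       - sigma * INR m - (c - lam) * (t - s) <= mu) ->
  GAS tau tk f g t0.
Proof.
  intros Htau Ht0 Htk0 Htkinc Htkunb _ _ HWP HV1 HV2 Ha1 Ha2 Ha3 Hr1 Hr2 Hmu Hlam Hkap
    Hi1 Hi2 Hii Hiii Hiv [sigma [Hcases Hv]].
  pose (FIN := fun phi T x eps0 HPC HT Hsol Heps0 =>
    final n tau t0 tk f g V1 V2 a1 a2 a3 c rho1 rho2 mu lam kap sigma Htau Ht0
      Htk0 Htkinc Htkunb HV1 HV2 Ha2 Hr1 Hr2 Hmu Hlam Hi1 Hi2 Hii Hiii Hiv
      Hcases phi T x eps0 HPC HT Hsol Heps0 Hv).
  assert (Ha1pos : forall e, 0 < e -> 0 < a1 e).
  { intros e He. destruct Ha1 as [H0 [_ [Hm _]]]. rewrite <- H0. apply Hm; lra. }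
  assert (Ha1inv : forall y e, 0 <= y -> 0 < e -> a1 y < a1 e -> y < e).
  { intros y e Hy He H. destruct (Rlt_le_dec y e); auto.
    pose proof (Kinf_mono a1 e y Ha1 ltac:(lra)). lra. }
  split.
  - intros eps Heps. pose proof (Ha1pos eps Heps) as HA.
    set (q := a1 eps * exp (- mu) / 4).
    assert (Hq : 0 < q) by (unfold q; pose proof (exp_pos (- mu)); apply Rdiv_lt_0_compat; [nra|lra]).
    pose proof Ha2 as [H20 [H2c _]]. pose proof Ha3 as [H30 [H3c _]].
    destruct (H2c 0 ltac:(lra) q Hq) as [d2 [Hd2 K2]].
    destruct (H3c 0 ltac:(lra) q Hq) as [d3 [Hd3 K3]].
    exists (Rmin d2 d3). split. apply Rmin_pos; lra.
    intros phi HPC Hsp T x HT Hsol t Ht.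
    pose proof (Rmin_l d2 d3). pose proof (Rmin_r d2 d3).
    pose proof (FIN phi T x q HPC HT Hsol Hq t Ht) as Hb.
    set (P := supnorm tau phi) in *.
    assert (HP : 0 <= P) by (pose proof (supnorm_ge n tau phi Htau HPC 0); pose proof (vnorm_nonneg _ (phi 0)); unfold P; lra).
    assert (Ha2P : a2 P < q).
    { specialize (K2 P HP ltac:(rewrite Rminus_0_r, Rabs_right; lra)). rewrite H20, Rminus_0_r in K2.
      apply Rabs_def2 in K2. lra. }
    assert (Ha3P : a3 P < q).
    { specialize (K3 P HP ltac:(rewrite Rminus_0_r, Rabs_right; lra)). rewrite H30, Rminus_0_r in K3.
      apply Rabs_def2 in K3. lra. }
    assert (HM0 : M0 n tau t0 V1 V2 a2 phi q < 4 * q).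
    { unfold M0. fold P. pose proof (Hi1 t0 (phi 0)) as [_ K]. pose proof (Hi2 t0 phi Ht0 HPC) as [_ K'].
      pose proof (supnorm_ge n tau phi Htau HPC 0) as Hs0. fold P in Hs0, K'.
      pose proof (Kinf_mono a2 _ _ Ha2 (conj (vnorm_nonneg _ (phi 0)) Hs0)).
      lra. }
    assert (Hex : exp (- (lam / 2) * (t - t0)) <= 1).
    { rewrite <- exp_0. apply exp_mono. nra. }
    assert (H4 : 4 * q * exp mu = a1 eps).
    { unfold q. replace (4 * (a1 eps * exp (- mu) / 4) * exp mu) with (a1 eps * (exp (- mu) * exp mu)) by field.
      rewrite <- exp_plus. replace (- mu + mu) with 0 by ring. rewrite exp_0. ring. }
    pose proof (M0_pos n tau t0 V1 V2 a2 a3 Htau Ht0 HV1 Ha2 Hi2 phi q HPC Hq).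
    pose proof (exp_pos mu). pose proof (exp_pos (- (lam / 2) * (t - t0))).
    apply Ha1inv; auto. apply vnorm_nonneg.
    assert (M0 n tau t0 V1 V2 a2 phi q * exp mu * exp (- (lam / 2) * (t - t0)) <= M0 n tau t0 V1 V2 a2 phi q * exp mu).
    { rewrite <- (Rmult_1_r (M0 n tau t0 V1 V2 a2 phi q * exp mu)) at 2. apply Rmult_le_compat_l; [nra|lra]. }
    nra.
  - intros phi HPC.
    destruct (HWP t0 phi Ht0 HPC) as [x [Gam [HGam [Hsolx [_ Hblow]]]]].
    pose proof (M0_pos n tau t0 V1 V2 a2 a3 Htau Ht0 HV1 Ha2 Hi2 phi 1 HPC ltac:(lra)) as HM0.
    set (R0 := M0 n tau t0 V1 V2 a2 phi 1 * exp mu).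
    assert (HR0 : 0 < R0) by (unfold R0; pose proof (exp_pos mu); nra).
    assert (Hbd : forall T, 0 < T -> IsSolOn tau tk f g t0 phi T x -> forall t, t0 <= t < t0 + T ->
              a1 (vnorm (x t)) <= R0 * exp (- (lam / 2) * (t - t0))).
    { intros T HT Hs t Ht. pose proof (FIN phi T x 1 HPC HT Hs ltac:(lra) t Ht). unfold R0. lra. }
    assert (Hglob : Gam = p_infty).
    { destruct Gam as [G| |]; auto; [|simpl in HGam; contradiction].
      exfalso. simpl in HGam.
      pose proof Ha1 as [_ [_ [Hm Hunb]]]. destruct (Hunb R0) as [M' [HM' HM'2]].
      destruct (Hblow G eq_refl M') as [t [Ht HM]].
      assert (Hs : IsSolOn tau tk f g t0 phi G x) by (apply Hsolx; simpl; lra).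
      pose proof (Hbd G HGam Hs t Ht).
      assert (exp (- (lam / 2) * (t - t0)) <= 1) by (rewrite <- exp_0; apply exp_mono; nra).
      pose proof (Hm M' (vnorm (x t)) HM' HM). nra. }
    subst Gam. exists x. split.
    + intros T HT. apply Hsolx; simpl; auto.
    + intros eps Heps. pose proof (Ha1pos eps Heps) as HA.
      exists (t0 + (2 / lam) * Rabs (ln (R0 / a1 eps)) + 1). intros t Ht.
      assert (Hab : 0 <= (2 / lam) * Rabs (ln (R0 / a1 eps))).
      { apply Rmult_le_pos. apply Rlt_le, Rdiv_lt_0_compat; lra. apply Rabs_pos. }
      assert (HT : 0 < t - t0 + 1) by lra.
      pose proof (Hbd (t - t0 + 1) HT (Hsolx _ HT I) t ltac:(lra)) as Hb.
      assert (Hln : ln (R0 / a1 eps) < (lam / 2) * (t - t0)).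
      { assert ((lam / 2) * (2 / lam) = 1) by (field; lra).
        assert ((lam / 2) * (t - t0) >= (lam / 2) * ((2 / lam) * Rabs (ln (R0 / a1 eps)) + 1)).
        { apply Rle_ge, Rmult_le_compat_l; lra. }
        replace ((lam / 2) * ((2 / lam) * Rabs (ln (R0 / a1 eps)) + 1)) with (Rabs (ln (R0 / a1 eps)) + lam / 2) in H0 by (field; lra).
        pose proof (Rle_abs (ln (R0 / a1 eps))). lra. }
      assert (Hexp : exp (- (lam / 2) * (t - t0)) < a1 eps / R0).
      { replace (a1 eps / R0) with (exp (- ln (R0 / a1 eps))).
        apply exp_increasing. lra.
        rewrite exp_Ropp, exp_ln. field. split; lra.
        apply Rdiv_lt_0_compat; lra. }
      apply Ha1inv; auto. apply vnorm_nonneg.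
      apply Rmult_lt_compat_l with (r := R0) in Hexp; auto.
      replace (R0 * (a1 eps / R0)) with (a1 eps) in Hexp by (field; lra). lra.
Qed.
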